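(* Let $(M,\sigma^M,\rho^M)$ be a ground module for $B\wr\mathcal{H}(d)$ with twist $\chi$ and structure map $\tau^M$ (notation as in the context), and write $\tau^M(w\otimes m)=\sum_{x\in\Sigma_d}\sigma^M_{x,w}(m)\otimes h_x$. Let $\mathrm{ind}_{1^d}^d(M^{\otimes d}):=B\wr\mathcal{H}(d)\otimes_{B^{\otimes d}}M^{\otimes d}$ and let $M\wr\widetilde{\mathcal{H}}^\chi_d$ be the $K$-module $M^{\otimes d}\otimes\widetilde{\mathcal{H}}^\chi_d$ with the $B\wr\mathcal{H}(d)$-action $(bH_w)\cdot(m\otimes n)=\sum_y(b\cdot m_y)\otimes h_yn$ where $\tau^M(w\otimes m)=\sum_ym_y\otimes h_y$ (here $\widetilde{\mathcal{H}}^\chi_d$ is its own left regular module). Then $$\tau^M:\mathrm{ind}_{1^d}^d(M^{\otimes d})\to M\wr\widetilde{\mathcal{H}}^\chi_d,\qquad H_w\otimes m\mapsto\sum_x\sigma^M_{x,w}(m)\otimes h_x,$$ is a homomorphism of $B\wr\mathcal{H}(d)$-modules. Moreover, it is an isomorphism if $\sigma^M_i$ is invertible for all $i$.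
   Context: Let $K$ be a commutative ring and $B$ a unital associative $K$-algebra, free over $K$. Fix $d\ge2$, $S,R\in B\otimes B$, $K$-linear $\sigma,\rho$ on $B\otimes B$; $Z_i$, $\phi_i$ denote $Z$, $\phi$ at tensor positions $i,i+1$ of $B^{\otimes d}$. $B\wr\mathcal{H}(d)$ is the $K$-algebra generated by $B^{\otimes d}$ and $H_1,\dots,H_{d-1}$ with braid relations, $H_i^2=S_iH_i+R_i$, $H_ib=\sigma_i(b)H_i+\rho_i(b)$ ($b\in B^{\otimes d}$); $H_w$ is defined via reduced expressions; it is assumed to have PBW bases $\{(b_{j_1}\otimes\cdots\otimes b_{j_d})H_w\}$ and $\{H_w(b_{j_1}\otimes\cdots\otimes b_{j_d})\}$ for a $K$-basis $\{b_j\}$ of $B$. For $\chi(S),\chi(R)\in K$, the twisted Hecke algebra $\widetilde{\mathcal{H}}^\chi_d$ is generated by $h_1,\dots,h_{d-1}$ with type A braid relations and $h_i^2=\chi(S)h_i+\chi(R)$. $M$ is a left $B$-module such that $S,R$ act on $M\otimes M$ by $\chi(S),\chi(R)$; $\sigma^M,\rho^M\in\mathrm{End}_K(M\otimes M)$ with $\sigma^M_i,\rho^M_i$ their actions on factors $i,i+1$ of $M^{\otimes d}$. $K\Sigma_d$ is the free $K$-module on $\Sigma_d$. For a choice map $r$ (a reduced expression $r(w)$ for each $w$, $r(1)$ empty, $r(w)=s_ir(x)$ with $x=s_iw<w$), $\tau^M:K\Sigma_d\otimes M^{\otimes d}\to M^{\otimes d}\otimes\widetilde{\mathcal{H}}^\chi_d$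 is defined by $\tau^M(1\otimes m)=m\otimes1$, $\tau^M(s_i\otimes m)=\sigma^M_i(m)\otimes h_i+\rho^M_i(m)\otimes1$, $\tau^M(w\otimes m)=\sum_y(\sigma^M_i(m_y)\otimes h_ih_y+\rho^M_i(m_y)\otimes h_y)$ if $r(w)=s_ir(x)$, $\tau^M(x\otimes m)=\sum_ym_y\otimes h_y$. Ground module: $\tau^M$ independent of $r$; for all $w,x,b,m$: $H_wb=\sum_gb_gH_g\Rightarrow\tau^M(w\otimes bm)=\sum_g(b_g\otimes1)\tau^M(g\otimes m)$; $H_wH_x=\sum_gc_gH_g$, $\tau^M(x\otimes m)=\sum_ym_y\otimes h_y\Rightarrow\sum_g(c_g\otimes1)\tau^M(g\otimes m)=\sum_y\tau^M(w\otimes m_y)(1\otimes h_y)$ ($B^{\otimes d}$ acting on the first factor, $(1\otimes h)$ right multiplication on the second). *)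

(* Defs.v *)
(* Abstract setting for Theorem 5.3 (wreath Hecke algebras,
   ground modules).  All tensor products are given by their universal
   properties; d = n.+2 (i.e. d >= 2). *)
From HB Require Import structures.
From mathcomp Require Import all_boot all_order all_fingroup all_algebra.
Set Implicit Arguments. Unset Strict Implicit. Unset Printing Implicit Defensive.
Import GRing.Theory.
Local Open Scope ring_scope.

Section Defs.
Variable K : comPzRingType.

Definition klinear (U V : lmodType K) (f : U -> V) :=
  forall (a : K) (x y : U), f (a *: x + y) = a *: f x + f y.

Definition kbilinear (U V X : lmodType K) (f : U -> V -> X) :=
  (forall v, klinear (fun u => f u v)) /\ (forall u, klinear (f u)).

Definition is_tensor2 (U V T : lmodType K) (t : U -> V -> T) :=
  kbilinear t /\
  forall (X : lmodType K) (f : U -> V -> X), kbilinear f ->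
    exists! g : T -> X, klinear g /\ forall u v, g (t u v) = f u v.

Definition upd (d : nat) (U : Type) (m : 'I_d -> U) (k : 'I_d) (x : U) :
  'I_d -> U := fun l => if l == k then x else m l.

Definition kmultilinear (d : nat) (U X : lmodType K) (f : ('I_d -> U) -> X) :=
  forall (m : 'I_d -> U) (k : 'I_d), klinear (fun x => f (upd m k x)).

Definition is_tensor_pow (d : nat) (U T : lmodType K) (t : ('I_d -> U) -> T) :=
  kmultilinear t /\
  forall (X : lmodType K) (f : ('I_d -> U) -> X), kmultilinear f ->
    exists! g : T -> X, klinear g /\ forall m, g (t m) = f m.

Definition is_tensor_alg2 (B B2 : algType K) (t : B -> B -> B2) :=
  is_tensor2 t /\ t 1 1 = 1 /\
  forall b c b' c', t b c * t b' c' = t (b * b') (c * c').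

Definition is_tensor_algpow (d : nat) (B Bd : algType K)
    (t : ('I_d -> B) -> Bd) :=
  is_tensor_pow t /\ t (fun _ => 1) = 1 /\
  forall x y, t x * t y = t (fun k => x k * y k).

Definition is_module (B : algType K) (M : lmodType K) (act : B -> M -> M) :=
  kbilinear act /\ (forall m, act 1 m = m) /\
  forall b c m, act (b * c) m = act b (act c m).

Definition is_kalg_morph (A C : algType K) (f : A -> C) :=
  klinear f /\ f 1 = 1 /\ forall x y, f (x * y) = f x * f y.

(* K-basis (for possibly infinite index sets) *)
Definition is_basis (V : lmodType K) (I : eqType) (e : I -> V) :=
  (forall v, exists (s : seq I) (c : I -> K), v = \sum_(i <- s) c i *: e i) /\
  (forall (s : seq I) (c : I -> K), uniq s ->
     \sum_(i <- s) c i *: e i = 0 -> forall i, i \in s -> c i = 0).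

(* balanced tensor product A (x)_{Bd} V, j : Bd -> A, act : Bd-action on V *)
Definition kbalanced (A Bd : algType K) (j : Bd -> A) (V X : lmodType K)
    (act : Bd -> V -> V) (f : A -> V -> X) :=
  kbilinear f /\ forall a b v, f (a * j b) v = f a (act b v).

Definition is_btensor (A Bd : algType K) (j : Bd -> A) (V T : lmodType K)
    (act : Bd -> V -> V) (p : A -> V -> T) :=
  kbalanced j act p /\
  forall (X : lmodType K) (f : A -> V -> X), kbalanced j act f ->
    exists! g : T -> X, klinear g /\ forall a v, g (p a v) = f a v.

Variable n : nat.

(* tensor positions i and i+1 for the generator index i : 'I_(d-1) *)
Definition posl (i : 'I_n.+1) : 'I_n.+2 := widen_ord (leqnSn n.+1) i.
Definition posr (i : 'I_n.+1) : 'I_n.+2 := lift ord0 i.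

Definition upd2 (U : Type) (m : 'I_n.+2 -> U) (i : 'I_n.+1) (a b : U) :=
  upd (upd m (posl i) a) (posr i) b.

Definition sgen (i : 'I_n.+1) : 'S_n.+2 := tperm (posl i) (posr i).
Definition wordp (s : seq 'I_n.+1) : 'S_n.+2 := (\prod_(i <- s) sgen i)%g.

Definition reduced_expr (s : seq 'I_n.+1) (w : 'S_n.+2) :=
  wordp s = w /\ forall s', wordp s' = w -> (size s <= size s')%N.

Definition choice_map (r : 'S_n.+2 -> seq 'I_n.+1) :=
  r 1%g = [::] /\ (forall w, reduced_expr (r w) w) /\
  (forall w, w != 1%g -> exists i, r w = i :: r (sgen i * w)%g).

(* product of generators along a word: H_w := wprod H (r w) *)
Definition wprod (C : pzRingType) (G : 'I_n.+1 -> C) (s : seq 'I_n.+1) : C :=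
  \prod_(i <- s) G i.

(* Phi i acts on t(m) as phi on the factors i, i+1 *)
Definition loc_ext (U U2 T : lmodType K) (tU : ('I_n.+2 -> U) -> T)
    (t2 : U -> U -> U2) (phi : U2 -> U2) (Phi : 'I_n.+1 -> T -> T) :=
  forall i, klinear (Phi i) /\
  forall (m : 'I_n.+2 -> U) (s : seq (U * U)),
    phi (t2 (m (posl i)) (m (posr i))) = \sum_(p <- s) t2 p.1 p.2 ->
    Phi i (tU m) = \sum_(p <- s) tU (upd2 m i p.1 p.2).

(* Zi i is the element z placed at tensor positions i, i+1 (1 elsewhere) *)
Definition loc_elt (B B2 Bd : algType K) (tBd : ('I_n.+2 -> B) -> Bd)
    (t2 : B -> B -> B2) (z : B2) (Zi : 'I_n.+1 -> Bd) :=
  forall i (s : seq (B * B)), z = \sum_(p <- s) t2 p.1 p.2 ->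
    Zi i = \sum_(p <- s) tBd (upd2 (fun _ => 1) i p.1 p.2).

Definition braid_rels (C : pzRingType) (G : 'I_n.+1 -> C) :=
  (forall i k : 'I_n.+1, val k = (val i).+1 -> G i * G k * G i = G k * G i * G k) /\
  (forall i k : 'I_n.+1, ((val i).+1 < val k)%N -> G i * G k = G k * G i).

Definition wreath_rels (Bd C : algType K) (f : Bd -> C) (G : 'I_n.+1 -> C)
    (Si Ri : 'I_n.+1 -> Bd) (sg rh : 'I_n.+1 -> Bd -> Bd) :=
  braid_rels G /\
  (forall i, G i * G i = f (Si i) * G i + f (Ri i)) /\
  (forall i b, G i * f b = f (sg i b) * G i + f (rh i b)).

Definition is_wreath_presentation (Bd A : algType K) (j : Bd -> A)
    (H : 'I_n.+1 -> A) (Si Ri : 'I_n.+1 -> Bd) (sg rh : 'I_n.+1 -> Bd -> Bd) :=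
  is_kalg_morph j /\ wreath_rels j H Si Ri sg rh /\
  forall (C : algType K) (f : Bd -> C) (G : 'I_n.+1 -> C),
    is_kalg_morph f -> wreath_rels f G Si Ri sg rh ->
    exists! phi : A -> C, is_kalg_morph phi /\
      (forall b, phi (j b) = f b) /\ (forall i, phi (H i) = G i).

Definition hecke_rels (C : algType K) (G : 'I_n.+1 -> C) (cS cR : K) :=
  braid_rels G /\ forall i, G i * G i = cS *: G i + cR%:A.

Definition is_hecke_presentation (Hc : algType K) (h : 'I_n.+1 -> Hc)
    (cS cR : K) :=
  hecke_rels h cS cR /\
  forall (C : algType K) (G : 'I_n.+1 -> C), hecke_rels G cS cR ->
    exists! phi : Hc -> C, is_kalg_morph phi /\ forall i, phi (h i) = G i.

(* Phi i = sigma^M_i (x) (left mult. by h_i) + rho^M_i (x) id  on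
   M^{(x)d} (x) Hc; tau_r(w (x) m) is obtained by applying Phi along r(w)
   to m (x) 1. *)
Definition tau_of (MT Hc W : Type) (one : Hc) (tW : MT -> Hc -> W)
    (Phi : 'I_n.+1 -> W -> W) (r : 'S_n.+2 -> seq 'I_n.+1)
    (w : 'S_n.+2) (v : MT) : W :=
  foldr (fun i x => Phi i x) (tW v one) (r w).

End Defs.

Section Ground.
Variables (K : comPzRingType) (n : nat).

(* The ground-module axioms (context), for the fixed choice map r.
   Lb b = (b (x) 1) acting on W = M^{(x)d} (x) Hc, Rh y = (1 (x) right mult. by y). *)
Definition is_ground_module (Bd A Hc : algType K) (MT W : lmodType K)
    (j : Bd -> A) (H : 'I_n.+1 -> A) (r : 'S_n.+2 -> seq 'I_n.+1)
    (tW : MT -> Hc -> W) (Phi : 'I_n.+1 -> W -> W)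
    (actd : Bd -> MT -> MT) (Lb : Bd -> W -> W) (Rh : Hc -> W -> W) :=
  let tau := tau_of 1 tW Phi in
  let Hw := fun w => wprod H (r w) in
  (forall r', choice_map r' -> forall w v, tau r' w v = tau r w v) /\
  (forall (w : 'S_n.+2) (b : Bd) (v : MT) (bg : 'S_n.+2 -> Bd),
     Hw w * j b = \sum_(g : 'S_n.+2) j (bg g) * Hw g ->
     tau r w (actd b v) = \sum_(g : 'S_n.+2) Lb (bg g) (tau r g v)) /\
  (forall (w x : 'S_n.+2) (v : MT) (c : 'S_n.+2 -> Bd) (s : seq (MT * Hc)),
     Hw w * Hw x = \sum_(g : 'S_n.+2) j (c g) * Hw g ->
     tau r x v = \sum_(p <- s) tW p.1 p.2 ->
     \sum_(g : 'S_n.+2) Lb (c g) (tau r g v) = \sum_(p <- s) Rh p.2 (tau r w p.1)).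

End Ground.

(* Main.v *)
Require Import Defs.
From HB Require Import structures.
From mathcomp Require Import all_boot all_order all_fingroup all_algebra.
From mathcomp Require Import boolp ring zify.
Set Implicit Arguments. Unset Strict Implicit. Unset Printing Implicit Defensive.
Import GRing.Theory.
Local Open Scope ring_scope.


Section Lin.
Variable K : comPzRingType.

Lemma kl0 (U V : lmodType K) (f : U -> V) : klinear f -> f 0 = 0.
Proof.
move=> hf; have h := hf 1 0 0; rewrite !scale1r !addr0 in h.
have := congr1 (fun z => z - f 0) h; rewrite /= subrr addrK; by move=> <-.
Qed.

Lemma klD (U V : lmodType K) (f : U -> V) : klinear f -> forall x y, f (x + y) = f x + f y.
Proof. by move=> hf x y; have := hf 1 x y; rewrite !scale1r. Qed.

Lemma klZ (U V : lmodType K) (f : U -> V) : klinear f -> forall a x, f (a *: x) = a *: f x.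
Proof. by move=> hf a x; have := hf a x 0; rewrite !addr0 (kl0 hf) addr0. Qed.

Lemma klN (U V : lmodType K) (f : U -> V) : klinear f -> forall x, f (- x) = - f x.
Proof. by move=> hf x; rewrite -scaleN1r (klZ hf) scaleN1r. Qed.

Lemma klB (U V : lmodType K) (f : U -> V) : klinear f -> forall x y, f (x - y) = f x - f y.
Proof. by move=> hf x y; rewrite (klD hf) (klN hf). Qed.

Lemma kl_sum (U V : lmodType K) (f : U -> V) : klinear f ->
  forall (I : Type) (s : seq I) (P : pred I) (F : I -> U),
  f (\sum_(i <- s | P i) F i) = \sum_(i <- s | P i) f (F i).
Proof. by move=> hf I s P F; apply: (big_morph f (klD hf) (kl0 hf)). Qed.

Lemma kl_comp (U V X : lmodType K) (f : U -> V) (g : V -> X) :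
  klinear f -> klinear g -> klinear (fun x => g (f x)).
Proof. by move=> hf hg a x y; rewrite hf hg. Qed.

Lemma kl_id (U : lmodType K) : klinear (fun x : U => x).
Proof. by []. Qed.

Lemma kl_add (U V : lmodType K) (f g : U -> V) :
  klinear f -> klinear g -> klinear (fun x => f x + g x).
Proof.
move=> hf hg a x y; rewrite hf hg scalerDr.
by rewrite -!addrA; congr (_ + _); rewrite addrC -!addrA; congr (_ + _); rewrite addrC.
Qed.

Lemma kl_scale (U V : lmodType K) (c : K) (f : U -> V) :
  klinear f -> klinear (fun x => c *: f x).
Proof. by move=> hf a x y; rewrite hf scalerDr !scalerA mulrC. Qed.

Lemma kl_opp (U V : lmodType K) (f : U -> V) :
  klinear f -> klinear (fun x => - f x).
Proof. by move=> hf a x y; rewrite hf opprD scalerN. Qed.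

Lemma kl_zero (U V : lmodType K) : klinear (fun _ : U => 0 : V).
Proof. by move=> a x y; rewrite scaler0 addr0. Qed.

Lemma bilL (U V X : lmodType K) (f : U -> V -> X) : kbilinear f ->
  forall v a x y, f (a *: x + y) v = a *: f x v + f y v.
Proof. by case=> hl _ v; apply: hl. Qed.

Lemma bilR (U V X : lmodType K) (f : U -> V -> X) : kbilinear f ->
  forall u a x y, f u (a *: x + y) = a *: f u x + f u y.
Proof. by case=> _ hr u; apply: hr. Qed.

Lemma bilL_lin (U V X : lmodType K) (f : U -> V -> X) : kbilinear f ->
  forall v, klinear (fun u => f u v).
Proof. by case. Qed.

Lemma bilR_lin (U V X : lmodType K) (f : U -> V -> X) : kbilinear f ->
  forall u, klinear (f u).
Proof. by case. Qed.

Lemma tensor2_ext (U V T X : lmodType K) (t : U -> V -> T) (g1 g2 : T -> X) :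
  is_tensor2 t -> klinear g1 -> klinear g2 ->
  (forall u v, g1 (t u v) = g2 (t u v)) -> forall z, g1 z = g2 z.
Proof.
case=> tb univ h1 h2 e.
have fb : kbilinear (fun u v => g1 (t u v)).
  split=> [v|u] a x y /=.
    by rewrite (bilL tb) h1.
  by rewrite (bilR tb) h1.
case: (univ X _ fb) => g [[gl gp] gu].
have e1 := gu g1 (conj h1 (fun u v => erefl)).
have e2 := gu g2 (conj h2 (fun u v => esym (e u v))).
by move=> z; rewrite -e1 -e2.
Qed.

Lemma tensor2_lift (U V T X : lmodType K) (t : U -> V -> T) (f : U -> V -> X) :
  is_tensor2 t -> kbilinear f ->
  exists g : T -> X, klinear g /\ forall u v, g (t u v) = f u v.
Proof. by case=> _ univ fb; case: (univ X f fb) => g [gp _]; exists g. Qed.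

Lemma upd_same (d : nat) (U : Type) (m : 'I_d -> U) k : upd m k (m k) = m.
Proof. by apply: funext => l; rewrite /upd; case: eqP => // ->. Qed.

Lemma tpow_ext (d : nat) (U T X : lmodType K) (t : ('I_d -> U) -> T) (g1 g2 : T -> X) :
  is_tensor_pow t -> klinear g1 -> klinear g2 ->
  (forall m, g1 (t m) = g2 (t m)) -> forall z, g1 z = g2 z.
Proof.
case=> tm univ h1 h2 e.
have fb : kmultilinear (fun m => g1 (t m)).
  by move=> m k a x y /=; rewrite (tm m k) h1.
case: (univ X _ fb) => g [[gl gp] gu].
have e1 := gu g1 (conj h1 (fun m => erefl)).
have e2 := gu g2 (conj h2 (fun m => esym (e m))).
by move=> z; rewrite -e1 -e2.
Qed.

Lemma btensor_ext (Aa Bd : algType K) (j : Bd -> Aa) (V T X : lmodType K)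
    (act : Bd -> V -> V) (p : Aa -> V -> T) (g1 g2 : T -> X) :
  is_btensor j act p -> klinear g1 -> klinear g2 ->
  (forall a v, g1 (p a v) = g2 (p a v)) -> forall z, g1 z = g2 z.
Proof.
case=> [[pb pbal] univ] h1 h2 e.
have fb : kbalanced j act (fun a v => g1 (p a v)).
  split; last by move=> a b v /=; rewrite pbal.
  split=> [v|u] a x y /=.
    by rewrite (bilL pb) h1.
  by rewrite (bilR pb) h1.
case: (univ X _ fb) => g [[gl gp] gu].
have e1 := gu g1 (conj h1 (fun a v => erefl)).
have e2 := gu g2 (conj h2 (fun a v => esym (e a v))).
by move=> z; rewrite -e1 -e2.
Qed.

Lemma btensor_lift (Aa Bd : algType K) (j : Bd -> Aa) (V T X : lmodType K)
    (act : Bd -> V -> V) (p : Aa -> V -> T) (f : Aa -> V -> X) :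
  is_btensor j act p -> kbalanced j act f ->
  exists g : T -> X, klinear g /\ forall a v, g (p a v) = f a v.
Proof. by case=> _ univ fb; case: (univ X f fb) => g [gp _]; exists g. Qed.

End Lin.


Section Quot.
Variable K : comPzRingType.
Variables (T : lmodType K) (P : T -> Prop).
Hypotheses (P0 : P 0) (PD : forall x y, P x -> P y -> P (x + y))
  (PZ : forall a x, P x -> P (a *: x)).

Lemma PN x : P x -> P (- x).
Proof. by move=> px; rewrite -scaleN1r; apply: PZ. Qed.
Lemma PB x y : P x -> P y -> P (x - y).
Proof. by move=> px py; apply: PD => //; apply: PN. Qed.

Definition qrel (x : T) : pred T := fun y => `[< P (x - y) >].
Definition canon (x : T) : T := choose (qrel x) x.

Lemma qrel_refl x : qrel x x.
Proof. by apply/asboolP; rewrite subrr. Qed.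

Lemma canonP x : P (x - canon x).
Proof. by have /asboolP := chooseP (qrel_refl x). Qed.

Lemma canon_eq x y : P (x - y) -> canon x = canon y.
Proof.
move=> pxy; rewrite /canon.
have e : qrel x =1 qrel y.
  move=> z; apply/asboolP/asboolP => h.
    by have := PB h pxy; rewrite opprB addrC addrA subrK.
  by have := PD pxy h; rewrite addrA subrK.
rewrite (eq_choose e); apply: choose_id; last exact: qrel_refl.
by apply/asboolP; rewrite -opprB; apply: PN.
Qed.

Lemma canon_idem x : canon (canon x) == canon x.
Proof. by apply/eqP/canon_eq; rewrite -opprB; apply/PN/canonP. Qed.

Record Qt := QMk { qval : T; _ : canon qval == qval }.
HB.instance Definition _ := [isSub for qval].
HB.instance Definition _ := [Choice of Qt by <:].

Definition qof (x : T) : Qt := QMk (canon_idem x).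

Lemma qofK (q : Qt) : qof (qval q) = q.
Proof. by apply: val_inj => /=; case: q => x /= /eqP. Qed.

Lemma qof_eq x y : P (x - y) -> qof x = qof y.
Proof. by move=> h; apply: val_inj => /=; apply: canon_eq. Qed.

Lemma qof_eqP x y : qof x = qof y -> P (x - y).
Proof.
move/(congr1 qval) => /= e.
have h := PB (canonP x) (canonP y).
by move: h; rewrite e opprB addrA subrK.
Qed.

Lemma qvalP x : P (qval (qof x) - x).
Proof. by rewrite /= -opprB; apply/PN/canonP. Qed.

Definition qadd (a b : Qt) := qof (qval a + qval b).
Definition qzero := qof 0.
Definition qopp (a : Qt) := qof (- qval a).
Definition qscale (c : K) (a : Qt) := qof (c *: qval a).

Lemma qaddE x y : qadd (qof x) (qof y) = qof (x + y).
Proof.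
apply: qof_eq; have := PD (qvalP x) (qvalP y).
by rewrite opprD addrACA.
Qed.
Lemma qoppE x : qopp (qof x) = qof (- x).
Proof. by apply: qof_eq; rewrite -opprD; apply/PN/qvalP. Qed.
Lemma qscaleE c x : qscale c (qof x) = qof (c *: x).
Proof. by apply: qof_eq; rewrite -scalerBr; apply/PZ/qvalP. Qed.

Lemma qaddA : associative qadd.
Proof. by move=> a b c; rewrite -[a]qofK -[b]qofK -[c]qofK !qaddE addrA. Qed.
Lemma qaddC : commutative qadd.
Proof. by move=> a b; rewrite -[a]qofK -[b]qofK !qaddE addrC. Qed.
Lemma qadd0 : left_id qzero qadd.
Proof. by move=> a; rewrite -[a]qofK /qzero qaddE add0r. Qed.
Lemma qaddN : left_inverse qzero qopp qadd.
Proof. by move=> a; rewrite -[a]qofK qoppE qaddE addNr. Qed.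

HB.instance Definition _ := GRing.isZmodule.Build Qt qaddA qaddC qadd0 qaddN.

Lemma qscaleA a b v : qscale a (qscale b v) = qscale (a * b) v.
Proof. by rewrite -[v]qofK !qscaleE scalerA. Qed.
Lemma qscale1 : left_id 1 qscale.
Proof. by move=> v; rewrite -[v]qofK qscaleE scale1r. Qed.
Lemma qscaleDr : right_distributive qscale qadd.
Proof. by move=> a u v; rewrite -[u]qofK -[v]qofK qaddE !qscaleE qaddE scalerDr. Qed.
Lemma qscaleDl v : {morph qscale^~ v : a b / a + b >-> qadd a b}.
Proof. by move=> a b; rewrite -[v]qofK !qscaleE qaddE scalerDl. Qed.

HB.instance Definition _ := GRing.Zmodule_isLmodule.Build K Qt qscaleA qscale1 qscaleDr qscaleDl.

Lemma qof_lin : klinear (qof : T -> Qt).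
Proof.
move=> a x y; change (qof (a *: x + y) = qadd (qscale a (qof x)) (qof y)).
by rewrite qscaleE qaddE.
Qed.

Lemma span_by_ext :
  (forall (X : lmodType K) (g1 g2 : T -> X), klinear g1 -> klinear g2 ->
     (forall t, P t -> g1 t = g2 t) -> forall t, g1 t = g2 t) ->
  forall t, P t.
Proof.
move=> ext t.
have e := ext Qt qof (fun _ => 0) qof_lin (@kl_zero K T Qt).
have h : forall t, P t -> qof t = 0.
  by move=> u pu; apply: (@qof_eq u 0); rewrite subr0.
have := qof_eqP (etrans (e h t) (erefl qzero)).
by rewrite subr0.
Qed.

End Quot.

Section Span.
Variable K : comPzRingType.

Lemma btensor_span (Aa Bd : algType K) (j : Bd -> Aa) (V T : lmodType K)
    (act : Bd -> V -> V) (p : Aa -> V -> T) :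
  is_btensor j act p ->
  forall z, exists s : seq (Aa * V), z = \sum_(q <- s) p q.1 q.2.
Proof.
move=> hp.
have pb : kbilinear p by case: hp => [[]].
apply: (@span_by_ext K T (fun z => exists s : seq (Aa * V), z = \sum_(q <- s) p q.1 q.2)).
- by exists [::]; rewrite big_nil.
- move=> x y [s1 ->] [s2 ->]; exists (s1 ++ s2); by rewrite big_cat.
- move=> a x [s ->]; exists [seq (a *: q.1, q.2) | q <- s].
  rewrite big_map scaler_sumr; apply: eq_bigr => q _ /=.
  by have := bilL pb q.2 a q.1 0; rewrite addr0 (kl0 (bilL_lin pb q.2)) addr0.
- move=> X g1 g2 h1 h2 e; apply: (btensor_ext hp h1 h2) => a v.
  by apply: e; exists [:: (a, v)]; rewrite big_seq1.
Qed.

End Span.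


Section LinEnd.
Variable K : comPzRingType.
Variables (V : lmodType K).

Record linend := LinEnd { lfun : V -> V; _ : `[< klinear lfun >] }.
HB.instance Definition _ := [isSub for lfun].
HB.instance Definition _ := [Choice of linend by <:].

Lemma lfunP (f : linend) : klinear (lfun f).
Proof. by case: f => g /= /asboolP. Qed.

Lemma lend_eq (f g : linend) : lfun f =1 lfun g -> f = g.
Proof. by move=> e; apply: val_inj; apply: funext. Qed.

Definition mkL (g : V -> V) (H : klinear g) : linend := LinEnd (introT (asboolP _) H).

Definition ladd (f g : linend) := mkL (kl_add (lfunP f) (lfunP g)).
Definition lzero := mkL (@kl_zero K V V).
Definition lopp (f : linend) := mkL (kl_opp (lfunP f)).
Definition lscale (c : K) (f : linend) := mkL (kl_scale c (lfunP f)).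

Lemma laddA : associative ladd.
Proof. by move=> f g h; apply: lend_eq => x /=; rewrite addrA. Qed.
Lemma laddC : commutative ladd.
Proof. by move=> f g; apply: lend_eq => x /=; rewrite addrC. Qed.
Lemma ladd0 : left_id lzero ladd.
Proof. by move=> f; apply: lend_eq => x /=; rewrite add0r. Qed.
Lemma laddN : left_inverse lzero lopp ladd.
Proof. by move=> f; apply: lend_eq => x /=; rewrite addNr. Qed.
HB.instance Definition _ := GRing.isZmodule.Build linend laddA laddC ladd0 laddN.

Lemma lscaleA a b v : lscale a (lscale b v) = lscale (a * b) v.
Proof. by apply: lend_eq => x /=; rewrite scalerA. Qed.
Lemma lscale1 : left_id 1 lscale.
Proof. by move=> f; apply: lend_eq => x /=; rewrite scale1r. Qed.
Lemma lscaleDr : right_distributive lscale ladd.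
Proof. by move=> a f g; apply: lend_eq => x /=; rewrite scalerDr. Qed.
Lemma lscaleDl v : {morph lscale^~ v : a b / a + b >-> ladd a b}.
Proof. by move=> a b; apply: lend_eq => x /=; rewrite scalerDl. Qed.
HB.instance Definition _ := GRing.Zmodule_isLmodule.Build K linend lscaleA lscale1 lscaleDr lscaleDl.

Definition lcompf (op : bool) (f g : linend) : V -> V :=
  if op then (fun x => lfun g (lfun f x)) else (fun x => lfun f (lfun g x)).
Lemma lcomp_lin op f g : klinear (lcompf op f g).
Proof. by rewrite /lcompf; case: op; apply: kl_comp; apply: lfunP. Qed.
Lemma lcompf3 op (f g k : linend) x :
  lcompf op (mkL (lcomp_lin op f g)) k x =
  if op then lfun k (lfun g (lfun f x)) else lfun f (lfun g (lfun k x)).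
Proof. by rewrite /lcompf /=; case: op. Qed.

Definition linendT (op : bool) (v0 : V) (Hv0 : v0 != 0) : Type := linend.
HB.instance Definition _ (op : bool) (v0 : V) (Hv0 : v0 != 0) := GRing.Lmodule.on (linendT op Hv0).
Section Op.
Variables (op : bool) (v0 : V) (Hv0 : v0 != 0).
Local Notation L := (linendT op Hv0).
Definition lmul (f g : L) : L := mkL (lcomp_lin op f g).
Definition lone : L := mkL (@kl_id K V).

Lemma lmulA : associative lmul.
Proof. by move=> f g h; apply: lend_eq => x; rewrite /= /lcompf /= /lcompf /=; case: op. Qed.
Lemma lmul1 : left_id lone lmul.
Proof. by move=> f; apply: lend_eq => x; rewrite /= /lcompf /= /lcompf /=; case: op. Qed.
Lemma lmulr1 : right_id lone lmul.
Proof. by move=> f; apply: lend_eq => x; rewrite /= /lcompf /= /lcompf /=; case: op. Qed.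
Lemma lmulDl : left_distributive lmul ladd.
Proof.
move=> f g h; apply: lend_eq => x; rewrite /= /lcompf /= /lcompf /=; case: op => //=.
by rewrite (klD (lfunP h)).
Qed.
Lemma lmulDr : right_distributive lmul ladd.
Proof.
move=> f g h; apply: lend_eq => x; rewrite /= /lcompf /= /lcompf /=; case: op => //=.
by rewrite (klD (lfunP f)).
Qed.
Lemma lone_neq0 : lone != 0 :> L.
Proof.
apply/eqP => /(congr1 (fun f : L => lfun f v0)) /= e.
by move: Hv0; rewrite e eqxx.
Qed.
HB.instance Definition _ := GRing.Zmodule_isNzRing.Build L lmulA lmul1 lmulr1 lmulDl lmulDr lone_neq0.

Lemma lscaleAl (a : K) (u v : L) : a *: (u * v) = (a *: u) * v.
Proof.
apply: lend_eq => x; rewrite /= /lcompf /= /lcompf /=; case: op => //=.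
by rewrite (klZ (lfunP v)).
Qed.
HB.instance Definition _ := GRing.Lmodule_isLalgebra.Build K L lscaleAl.
Lemma lscaleAr (a : K) (u v : L) : a *: (u * v) = u * (a *: v).
Proof.
apply: lend_eq => x; rewrite /= /lcompf /= /lcompf /=; case: op => //=.
by rewrite (klZ (lfunP u)).
Qed.
HB.instance Definition _ := GRing.Lalgebra_isAlgebra.Build K L lscaleAr.

Lemma lfunD (f g : L) x : lfun (f + g) x = lfun f x + lfun g x. Proof. by []. Qed.
Lemma lfunZ a (f : L) x : lfun (a *: f) x = a *: lfun f x. Proof. by []. Qed.
Lemma lfunM (f g : L) x :
  lfun (f * g) x = if op then lfun g (lfun f x) else lfun f (lfun g x).
Proof. by rewrite /= /lcompf; case: op. Qed.
Lemma lfunM3 (f g k : L) x :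
  lfun (f * g * k) x = if op then lfun k (lfun g (lfun f x)) else lfun f (lfun g (lfun k x)).
Proof. exact: lcompf3. Qed.
Lemma lfun1 x : lfun (1 : L) x = x. Proof. by []. Qed.
Lemma lfunA a x : lfun (a%:A : L) x = a *: x. Proof. by []. Qed.

End Op.
End LinEnd.



Lemma if_congr (T : Type) (b : bool) (x y z w : T) : x = z -> y = w ->
  (if b then x else y) = (if b then z else w).
Proof. by move=> -> ->. Qed.

Section HeckeRep.
Variables (K : comPzRingType) (n : nat) (Hc : algType K) (h : 'I_n.+1 -> Hc)
  (cS cR : K) (HHc : is_hecke_presentation h cS cR).

Definition ev_morph (V : lmodType K) (op : bool) (ev : Hc -> V -> V) :=
  [/\ forall y, klinear (ev y),
      forall a y y' x, ev (a *: y + y') x = a *: ev y x + ev y' x,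
      forall x, ev 1 x = x &
      forall y y' x, ev (y * y') x = if op then ev y' (ev y x) else ev y (ev y' x)].

Definition gen_rels (V : lmodType K) (G : 'I_n.+1 -> V -> V) :=
  [/\ forall i, klinear (G i),
      forall i x, G i (G i x) = cS *: G i x + cR *: x,
      forall i k : 'I_n.+1, val k = (val i).+1 -> forall x, G i (G k (G i x)) = G k (G i (G k x)) &
      forall i k : 'I_n.+1, ((val i).+1 < val k)%N -> forall x, G i (G k x) = G k (G i x)].

Lemma morph_rels (C : algType K) (f : Hc -> C) : is_kalg_morph f ->
  hecke_rels (fun i => f (h i)) cS cR.
Proof.
case=> fl [f1 fM]; case: HHc => [[[hb hc] hq] _].
split; first split.
- by move=> i k e; rewrite -!fM hb.
- by move=> i k e; rewrite -!fM hc.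
- move=> i; rewrite -fM hq (klD fl) (klZ fl) (klZ fl) f1 //.
Qed.

Lemma hecke_rep (V : lmodType K) (op : bool) (v0 : V) : v0 != 0 ->
  forall G : 'I_n.+1 -> V -> V, gen_rels G ->
  exists ev, ev_morph op ev /\ forall i x, ev (h i) x = G i x.
Proof.
move=> Hv0 G [Gl Gq Gb Gc].
pose L := linendT op Hv0.
pose GL i : L := mkL (Gl i).
have hr : hecke_rels GL cS cR.
  split; first split.
  - move=> i k e; apply: lend_eq => x.
    by rewrite !lfunM3 /=; apply: if_congr; rewrite (Gb _ _ e).
  - move=> i k e; apply: lend_eq => x; rewrite !lfunM /=.
    by apply: if_congr; rewrite (Gc _ _ e).
  - by move=> i; apply: lend_eq => x; rewrite !lfunM /= Gq if_same.
case: HHc => _ /(_ L GL hr) [phi [[[pl [p1 pM]] ph] _]].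
exists (fun y x => lfun (phi y) x); split; last by move=> i x; rewrite ph.
split.
- by move=> y; apply: lfunP.
- by move=> a y y' x; rewrite pl.
- by move=> x; rewrite p1.
- by move=> y y' x; rewrite pM lfunM.
Qed.

Lemma hecke_uniq (V : lmodType K) (op : bool) (v0 : V) : v0 != 0 ->
  forall ev1 ev2 : Hc -> V -> V, ev_morph op ev1 -> ev_morph op ev2 ->
  (forall i x, ev1 (h i) x = ev2 (h i) x) -> forall y x, ev1 y x = ev2 y x.
Proof.
move=> Hv0 ev1 ev2 [l1 a1 o1 m1] [l2 a2 o2 m2] e.
pose L := linendT op Hv0.
pose phi1 y : L := mkL (l1 y).
pose phi2 y : L := mkL (l2 y).
have mor1 : is_kalg_morph phi1.
  split; first by move=> a y y'; apply: lend_eq => x /=; rewrite a1.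
  split; first by apply: lend_eq => x /=; rewrite o1.
  by move=> y y'; apply: lend_eq => x; rewrite lfunM /= m1.
have mor2 : is_kalg_morph phi2.
  split; first by move=> a y y'; apply: lend_eq => x /=; rewrite a2.
  split; first by apply: lend_eq => x /=; rewrite o2.
  by move=> y y'; apply: lend_eq => x; rewrite lfunM /= m2.
have hr := morph_rels mor1.
case: HHc => _ /(_ L _ hr) [phi [_ pu]].
have u1 := pu phi1 (conj mor1 (fun i => erefl)).
have u2 : phi = phi2.
  apply: pu; split => // i; apply: lend_eq => x /=; by rewrite e.
move=> y x; have := congr1 (fun f => lfun (f y) x) (etrans (esym u1) u2).
by [].
Qed.

End HeckeRep.


Section Perm.
Variable n : nat.
Local Notation S := ('S_n.+2).

Definition up (i : 'I_n.+1) (x : S) : bool := (x (posl i) < x (posr i))%N.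
Definition si (i : 'I_n.+1) (x : S) : S := (sgen i * x)%g.

Lemma posl_val (i : 'I_n.+1) : val (posl i) = val i. Proof. by []. Qed.
Lemma posr_val (i : 'I_n.+1) : val (posr i) = (val i).+1. Proof. by []. Qed.

Lemma posl_neq_posr (i : 'I_n.+1) : posl i != posr i.
Proof. by apply/eqP => /(congr1 val) /=; rewrite /bump /=; lia. Qed.

Lemma siK (i : 'I_n.+1) x : si i (si i x) = x.
Proof. by rewrite /si tpermKg. Qed.

Lemma si_inj (i : 'I_n.+1) : injective (si i).
Proof. exact: (can_inj (siK i)). Qed.

Lemma si_l (i : 'I_n.+1) y : (si i y) (posl i) = y (posr i).
Proof. by rewrite /si permM /sgen tpermL. Qed.
Lemma si_r (i : 'I_n.+1) y : (si i y) (posr i) = y (posl i).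
Proof. by rewrite /si permM /sgen tpermR. Qed.
Lemma si_o (i : 'I_n.+1) y p : posl i != p -> posr i != p -> (si i y) p = y p.
Proof. by move=> h1 h2; rewrite /si permM /sgen tpermD. Qed.

Lemma val_inj_neq (x : S) (p q : 'I_n.+2) : p != q -> (val (x p) != val (x q)).
Proof. by move=> h; apply: contra h => /eqP /val_inj /perm_inj ->. Qed.

Lemma up_si (i : 'I_n.+1) x : up i (si i x) = ~~ up i x.
Proof.
rewrite /up si_l si_r; have := val_inj_neq x (posl_neq_posr i).
case: (x (posl i)) => a ha; case: (x (posr i)) => b hb /=; lia.
Qed.

Lemma braid_perm (i k : 'I_n.+1) : val k = (val i).+1 ->
  (sgen i * (sgen k * sgen i) = sgen k * (sgen i * sgen k))%g.
Proof.
move=> e.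
have e1 : posl k = posr i by apply: val_inj; rewrite /= e.
have d1 : posl i != posr k.
  by apply/eqP => /(congr1 val) /=; move: e => /= e; rewrite /bump /=; lia.
have d2 : posr i != posr k.
  by apply/eqP => /(congr1 val) /=; move: e => /= e; rewrite /bump /=; lia.
have E1 : (sgen i * (sgen k * sgen i) = (sgen k) ^ (sgen i))%g.
  by rewrite /conjg /sgen tpermV.
have E2 : (sgen k * (sgen i * sgen k) = (sgen i) ^ (sgen k))%g.
  by rewrite /conjg /sgen tpermV.
rewrite E1 E2 /sgen !tpermJ e1 tpermR tpermL (tpermD d1) //.
have d3 : posr i != posl i by rewrite eq_sym posl_neq_posr.
have d1' : posr k != posl i by rewrite eq_sym.
by rewrite (tpermD d3 d1').
Qed.

Lemma far_perm (i k : 'I_n.+1) : ((val i).+1 < val k)%N ->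
  (sgen i * sgen k = sgen k * sgen i)%g.
Proof.
move=> e; have {e} e : ((nat_of_ord i).+1 < nat_of_ord k)%N := e.
have d : forall a b : 'I_n.+2, (val a != val b) -> a != b.
  by move=> a b; apply: contra => /eqP ->.
have q1 : posl i != posl k by apply: d => /=; lia.
have q2 : posl i != posr k by apply: d => /=; rewrite /bump /=; lia.
have q3 : posr i != posl k by apply: d => /=; rewrite /bump /=; lia.
have q4 : posr i != posr k by apply: d => /=; rewrite /bump /=; lia.
have c : ((sgen k) ^ (sgen i) = sgen k)%g.
  by rewrite /sgen tpermJ !tpermD // eq_sym.
move: c; rewrite /conjg /sgen tpermV => c.
by rewrite -[in RHS]c -!mulgA tperm2 mulg1.
Qed.

End Perm.

Section Tf.
Variables (K : comPzRingType) (n : nat) (cS cR : K).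
Local Notation S := ('S_n.+2).
Local Notation E := {ffun S -> K^o}.

Definition Tf (i : 'I_n.+1) (f : E) : E :=
  [ffun x => if up i x then cR * f (si i x) else f (si i x) + cS * f x].

Lemma TfE i f x : Tf i f x = if up i x then cR * f (si i x) else f (si i x) + cS * f x.
Proof. by rewrite ffunE. Qed.

Lemma si_braid (i k : 'I_n.+1) x : val k = (val i).+1 ->
  si i (si k (si i x)) = si k (si i (si k x)).
Proof. by move=> e; rewrite /si !mulgA -(mulgA (sgen i)) braid_perm // !mulgA. Qed.

Lemma si_far (i k : 'I_n.+1) x : ((val i).+1 < val k)%N ->
  si i (si k x) = si k (si i x).
Proof. by move=> e; rewrite /si !mulgA far_perm. Qed.

Lemma up_far (i k : 'I_n.+1) x :
  posl k != posl i -> posr k != posl i -> posl k != posr i -> posr k != posr i ->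
  up i (si k x) = up i x.
Proof. by move=> a b c d; rewrite /up !si_o. Qed.

Lemma scK (a : K) (b : K^o) : a *: b = a * b. Proof. by []. Qed.

Lemma Tf_rels : gen_rels cS cR Tf.
Proof.
split.
- move=> i a f g; apply/ffunP => x; rewrite !ffunE.
  by case: (up i x); rewrite !scK; ring.
- move=> i f; apply/ffunP => x; rewrite !ffunE up_si siK.
  by case: (up i x); rewrite /= !scK; ring.
- move=> i k e f; apply/ffunP => x.
  have e1 : posl k = posr i by apply: val_inj; rewrite /= e.
  have d1 : posl i != posr k.
    by apply/eqP => /(congr1 val) /=; move: e => /= e; rewrite /bump /=; lia.
  have d2 : posr i != posr k.
    by apply/eqP => /(congr1 val) /=; move: e => /= e; rewrite /bump /=; lia.
  have d0 := posl_neq_posr i.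
  have A0 y : (si i y) (posl i) = y (posr i) by rewrite si_l.
  have A1 y : (si i y) (posr i) = y (posl i) by rewrite si_r.
  have A2 y : (si i y) (posr k) = y (posr k) by apply: si_o.
  have B0 y : (si k y) (posl i) = y (posl i).
    by apply: si_o; [rewrite e1 eq_sym | rewrite eq_sym].
  have B1 y : (si k y) (posr i) = y (posr k) by rewrite -e1 si_l.
  have B2 y : (si k y) (posr k) = y (posr i) by rewrite si_r e1.
  have Ui y : up i y = (y (posl i) < y (posr i))%N by [].
  have Uk y : up k y = (y (posr i) < y (posr k))%N by rewrite /up e1.
  rewrite !ffunE !Ui !Uk !(A0, A1, A2, B0, B1, B2) !siK (si_braid _ e).
  have n01 := val_inj_neq x d0.
  have n02 := val_inj_neq x d1.
  have n12 := val_inj_neq x d2.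
  move: n01 n02 n12.
  case: (x (posl i)) => a ha; case: (x (posr i)) => b hb; case: (x (posr k)) => c hc /=.
  move=> n01 n02 n12.
  case: (ltngtP a b) => hab; case: (ltngtP b c) => hbc; case: (ltngtP a c) => hac;
    rewrite /= ?scK; try (exfalso; lia); ring.
- move=> i k e f; apply/ffunP => x.
  have d : forall a b : 'I_n.+2, (val a != val b) -> a != b.
    by move=> a b; apply: contra => /eqP ->.
  move: e => /= e.
  have q1 : posl k != posl i by apply: d => /=; lia.
  have q2 : posr k != posl i by apply: d => /=; rewrite /bump /=; lia.
  have q3 : posl k != posr i by apply: d => /=; rewrite /bump /=; lia.
  have q4 : posr k != posr i by apply: d => /=; rewrite /bump /=; lia.
  have U1 y : up i (si k y) = up i y by apply: up_far.
  have U2 y : up k (si i y) = up k y by apply: up_far; rewrite eq_sym.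
  rewrite !ffunE !U1 !U2 (si_far _ e).
  by case: (up i x); case: (up k x); rewrite /= ?scK; ring.
Qed.
End Tf.

Section Inv.
Variable n : nat.
Local Notation S := ('S_n.+2).
Local Notation N := n.+2.

Definition ninv (x : S) : nat :=
  (\sum_(p : 'I_N * 'I_N) ((p.1 < p.2) && (x p.2 < x p.1)))%N.

Lemma ord_neq (a b : 'I_N) : (a != b) = (val a != val b).
Proof. by []. Qed.

Lemma ordE (a b : 'I_N) : (a == b) = (nat_of_ord a == nat_of_ord b).
Proof. by []. Qed.

Lemma tval (i : 'I_n.+1) (a : 'I_N) :
  nat_of_ord (sgen i a) =
  if nat_of_ord a == nat_of_ord i then (nat_of_ord i).+1
  else if nat_of_ord a == (nat_of_ord i).+1 then nat_of_ord i else nat_of_ord a.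
Proof.
rewrite /sgen; case: tpermP => [->|->|h1 h2] /=; rewrite /bump /= ?add1n ?eqxx //.
  by case: eqP => //; lia.
have {h1} h1 : (nat_of_ord a != nat_of_ord (posl i)).
  by apply/eqP => e; apply: h1; apply: val_inj.
have {h2} h2 : (nat_of_ord a != nat_of_ord (posr i)).
  by apply/eqP => e; apply: h2; apply: val_inj.
move: h1 h2; rewrite /= /bump /= add1n.
by do 2 case: eqP => //; lia.
Qed.

Lemma t_order (i : 'I_n.+1) (a b : 'I_N) :
  (a, b) != (posl i, posr i) -> (a, b) != (posr i, posl i) ->
  (sgen i a < sgen i b)%N = (a < b)%N.
Proof.
rewrite !xpair_eqE !tval.
case: a => a ha; case: b => b hb.
move=> h1 h2.
have {h1} h1 : ~~ ((a == nat_of_ord (posl i)) && (b == nat_of_ord (posr i))) := h1.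
have {h2} h2 : ~~ ((a == nat_of_ord (posr i)) && (b == nat_of_ord (posl i))) := h2.
move: h1 h2; rewrite /= /bump /= !add1n.
move=> h1 h2; repeat case: ifP => ?; apply/idP/idP; lia.
Qed.

Lemma inv_si (i : 'I_n.+1) (x : S) :
  (ninv (si i x) + ~~ up i x = ninv x + up i x)%N.
Proof.
pose t := sgen i.
pose phi (p : 'I_N * 'I_N) := (t p.1, t p.2).
have phiK : involutive phi by move=> [a b]; rewrite /phi /t /sgen /= !tpermK.
have -> : ninv (si i x) = (\sum_(p : 'I_N * 'I_N) ((t p.1 < t p.2) && (x p.2 < x p.1)))%N.
  rewrite /ninv (reindex_inj (inv_inj phiK)); apply: eq_bigr => -[a b] _.
  by rewrite /= /si !permM /t /sgen !tpermK.
rewrite /ninv.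
pose P0 := (posl i, posr i); pose P1 := (posr i, posl i).
have P01 : P1 != P0 by rewrite xpair_eqE eq_sym (negbTE (posl_neq_posr i)).
rewrite (bigD1 P0) // (bigD1 P1) //= [in RHS](bigD1 P0) // [in RHS](bigD1 P1) //=.
have -> : (\sum_(p | (p != P0) && (p != P1)) ((t p.1 < t p.2) && (x p.2 < x p.1)))%N =
          (\sum_(p | (p != P0) && (p != P1)) ((p.1 < p.2) && (x p.2 < x p.1)))%N.
  by apply: eq_bigr => -[a b] /andP [h1 h2] /=; rewrite t_order.
rewrite /t /sgen tpermL tpermR /up /=.
have := val_inj_neq x (posl_neq_posr i).
rewrite /bump /=.
case: (x (posl i)) => a ha; case: (x (posr i)) => b hb /=.
move=> nab; case: (ltngtP a b) => h; rewrite /= ?add1n ?ltnn; try lia.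
Qed.

Lemma inv1 : ninv 1 = 0%N.
Proof. by rewrite /ninv big1 // => -[a b] _; rewrite !perm1 /=; case: ltngtP. Qed.

Lemma wordp_cons (i : 'I_n.+1) s : wordp (i :: s) = si i (wordp s).
Proof. by rewrite /wordp big_cons. Qed.
Lemma wordp_nil : wordp [::] = 1%g :> S.
Proof. by rewrite /wordp big_nil. Qed.

Lemma inv_word (s : seq 'I_n.+1) : (ninv (wordp s) <= size s)%N.
Proof.
elim: s => [|i s IH]; first by rewrite wordp_nil inv1.
rewrite wordp_cons /=; have := inv_si i (wordp s).
by case: (up i (wordp s)) => /=; lia.
Qed.

Lemma inv_up (i : 'I_n.+1) x : up i x -> ninv (si i x) = (ninv x).+1.
Proof. by move=> h; have := inv_si i x; rewrite h /=; lia. Qed.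
Lemma inv_down (i : 'I_n.+1) x : ~~ up i x -> ninv x = (ninv (si i x)).+1.
Proof. by move=> h; have := inv_si i x; rewrite (negbTE h) /=; lia. Qed.

Local Open Scope nat_scope.
Lemma all_up_id (x : S) : (forall i, up i x) -> x = 1%g.
Proof.
move=> hu.
have inc : forall k (hk : (k.+1 < N)%N), (x (inord k) < x (inord k.+1))%N.
  move=> k hk; have := hu (inord k); rewrite /up.
  have -> : posl (inord k : 'I_n.+1) = inord k by apply: val_inj; rewrite /= !inordK //; lia.
  have -> : posr (inord k : 'I_n.+1) = inord k.+1.
    by apply: val_inj; rewrite /= /bump /= !inordK //; lia.
  by [].
have lo : forall k, (k < N)%N -> (k <= x (inord k))%N.
  elim=> [|k IH] hk //; have := inc k hk; have := IH (ltnW hk); lia.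
have hi : forall m, (m < N)%N -> (x (inord (N.-1 - m)) <= N.-1 - m)%N.
  elim=> [|m IH] hm.
    by rewrite subn0; have := ltn_ord (x (inord N.-1)); lia.
  have := IH (ltnW hm); have := inc (N.-1 - m.+1) ltac:(lia).
  have -> : (N.-1 - m.+1).+1 = N.-1 - m by lia.
  lia.
apply/permP => p; rewrite perm1; apply: val_inj.
have ep : p = inord p by rewrite inord_val.
have := lo p (ltn_ord p); have := hi (N.-1 - p) ltac:(lia).
have -> : N.-1 - (N.-1 - p) = p by have := ltn_ord p; lia.
by rewrite -ep /=; lia.
Qed.

Lemma word_of_inv (m : nat) (x : S) : ninv x = m ->
  exists s, wordp s = x /\ size s = m.
Proof.
elim: m x => [|m IH] x hx.
  exists [::]; split => //; rewrite wordp_nil; apply/esym/all_up_id => i.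
  apply/negPn/negP => h; have := inv_down h; rewrite hx //.
have : ~~ [forall i, up i x].
  apply/negP => /forallP h; move: hx; rewrite (all_up_id h) inv1 //.
rewrite negb_forall => /existsP [i hi].
have := inv_down hi; rewrite hx => -[] /esym /IH [s [hs hsz]].
exists (i :: s); split; last by rewrite /= hsz.
by rewrite wordp_cons hs siK.
Qed.

Lemma reduced_size s (w : S) : reduced_expr s w -> size s = ninv w.
Proof.
case=> hw hmin; case: (word_of_inv (erefl (ninv w))) => s' [h1 h2].
have := hmin s' h1; have := inv_word s; rewrite hw; lia.
Qed.

Section ChoiceMap.
Variable r : S -> seq 'I_n.+1.
Hypothesis Hr : choice_map r.

Lemma r_size w : size (r w) = ninv w.
Proof. by case: Hr => _ [h _]; apply: reduced_size. Qed.

Lemma r_word w : wordp (r w) = w.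
Proof. by case: Hr => _ [h _]; case: (h w). Qed.

Lemma r_step (w : S) : w != 1%g ->
  exists i, [/\ r w = i :: r (si i w), up i (si i w) & ninv w = (ninv (si i w)).+1].
Proof.
move=> hw; case: Hr => _ [_ /(_ w hw) [i hi]]; exists i.
have hs : ninv w = (ninv (si i w)).+1 by rewrite -!r_size hi.
split => //.
have := inv_si i (si i w); rewrite siK hs.
by case: (up i (si i w)) => //=; lia.
Qed.

Lemma r_nil w : r w = [::] -> w = 1%g.
Proof. by move=> h; rewrite -(r_word w) h wordp_nil. Qed.

Lemma r_one : r 1%g = [::].
Proof. by case: Hr. Qed.

Lemma sgen_si (i : 'I_n.+1) : sgen i = si i 1%g.
Proof. by rewrite /si mulg1. Qed.

Lemma r_sgen (i : 'I_n.+1) : r (sgen i) = [:: i].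
Proof.
have hu : up i 1%g by rewrite /up !perm1 /= /bump /=; lia.
have hinv : ninv (sgen i) = 1%N by rewrite sgen_si (inv_up hu) inv1.
have hne : sgen i != 1%g.
  by apply/eqP => e; move: hinv; rewrite e inv1.
case: (r_step hne) => k [hk _ _].
have hsz := r_size (sgen i); rewrite hinv hk /= in hsz.
case: hsz => /size0nil h0; rewrite h0 in hk.
have := r_word (sgen i); rewrite hk wordp_cons wordp_nil /si mulg1 => ek.
have := congr1 (fun s : S => s (posl k)) ek; rewrite /sgen tpermL.
case: tpermP => [e1|e1|n1 n2].
- move=> _; suff ek' : k = i by move: hk; rewrite ek'; exact.
  by apply: val_inj; move/(congr1 val): e1.
- move=> e2; move/(congr1 val): e1; move/(congr1 val): e2 => /=; rewrite /bump /=; lia.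
- by move=> e2; have := posl_neq_posr k; rewrite e2 eqxx.
Qed.

End ChoiceMap.
End Inv.


Section Main.
Variables (K : comPzRingType) (n : nat).
Variables (B Bd : algType K) (tBd : ('I_n.+2 -> B) -> Bd).
Hypothesis (HBd : is_tensor_algpow tBd).
Variables (A : algType K) (j : Bd -> A) (H : 'I_n.+1 -> A).
Hypothesis (Hj : is_kalg_morph j).
Variable (r : 'S_n.+2 -> seq 'I_n.+1).
Hypothesis (Hr : choice_map r).
Local Notation Hw w := (wprod H (r w)).
Hypothesis Hleft : forall a : A, exists e : 'S_n.+2 -> Bd, a = \sum_g j (e g) * Hw g.
Hypothesis Hright : forall a : A, exists e : 'S_n.+2 -> Bd, a = \sum_g Hw g * j (e g).
Variables (chiS chiR : K) (Hc : algType K) (h : 'I_n.+1 -> Hc).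
Hypothesis (HHc : is_hecke_presentation h chiS chiR).
Variables (M MT : lmodType K) (actM : B -> M -> M).
Hypothesis (HM : is_module actM).
Variable (tM : ('I_n.+2 -> M) -> MT).
Hypothesis (HtM : is_tensor_pow tM).
Variable (actd : Bd -> MT -> MT).
Hypothesis (Hactd : kbilinear actd /\
     forall x m, actd (tBd x) (tM m) = tM (fun k => actM (x k) (m k))).
Variables (sigMi rhoMi : 'I_n.+1 -> MT -> MT).
Hypotheses (Hsl : forall i, klinear (sigMi i)) (Hrl : forall i, klinear (rhoMi i)).
Variables (W : lmodType K) (tW : MT -> Hc -> W).
Hypothesis (HtW : is_tensor2 tW).
Variable (Phi : 'I_n.+1 -> W -> W).
Hypothesis (HPhi : forall i, klinear (Phi i) /\ forall v y,
     Phi i (tW v y) = tW (sigMi i v) (h i * y) + tW (rhoMi i v) y).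
Variable (Lb : Bd -> W -> W).
Hypothesis (HLb : forall b, klinear (Lb b) /\ forall v y, Lb b (tW v y) = tW (actd b v) y).
Variable (Rh : Hc -> W -> W).
Hypothesis (HRh : forall y, klinear (Rh y) /\ forall v y', Rh y (tW v y') = tW v (y' * y)).
Hypothesis (Hground : is_ground_module j H r tW Phi actd Lb Rh).
Variables (Ind : lmodType K) (pI : A -> MT -> Ind).
Hypothesis (HpI : is_btensor j actd pI).
Variable (actI : A -> Ind -> Ind).
Hypothesis (HactI : forall a, klinear (actI a) /\ forall a' v, actI a (pI a' v) = pI (a * a') v).
Variable (actW : A -> W -> W).
Hypothesis (HactW : (forall x, klinear (fun a => actW a x)) /\ (forall a, klinear (actW a)) /\
     forall b w v y, actW (j b * wprod H (r w)) (tW v y) =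
                     Lb b (Rh y (tau_of 1 tW Phi r w v))).

Local Notation tau w v := (tau_of 1 tW Phi r w v).
Definition tauL (l : seq 'I_n.+1) (v : MT) : W := foldr (fun i x => Phi i x) (tW v 1) l.

Lemma jlin : klinear j. Proof. by case: Hj. Qed.
Lemma j1 : j 1 = 1. Proof. by case: Hj => _ []. Qed.
Lemma jM b c : j (b * c) = j b * j c. Proof. by case: Hj => _ [_]. Qed.

Lemma tWbil : kbilinear tW. Proof. by case: HtW. Qed.
Lemma tWlinL y : klinear (fun v => tW v y). Proof. exact: (bilL_lin tWbil). Qed.
Lemma tWlinR v : klinear (tW v). Proof. exact: (bilR_lin tWbil). Qed.

Lemma actd_bil : kbilinear actd. Proof. by case: Hactd. Qed.
Lemma actd_lin b : klinear (actd b). Proof. exact: (bilR_lin actd_bil). Qed.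
Lemma actd_linb v : klinear (fun b => actd b v). Proof. exact: (bilL_lin actd_bil). Qed.

Lemma tBd_pow : is_tensor_pow tBd. Proof. by case: HBd. Qed.
Lemma tBd1 : tBd (fun _ => 1) = 1. Proof. by case: HBd => _ []. Qed.
Lemma tBdM x y : tBd x * tBd y = tBd (fun k => x k * y k). Proof. by case: HBd => _ []. Qed.

Lemma actd1 v : actd 1 v = v.
Proof.
apply: (tpow_ext HtM (actd_lin 1) (@kl_id K MT)) => m.
rewrite -tBd1 Hactd.2; congr tM; apply: funext => k; by case: HM => _ [-> _].
Qed.

Lemma mulr_lin_l (c : Bd) : klinear (fun b : Bd => b * c).
Proof. by move=> a x y; rewrite mulrDl scalerAl. Qed.
Lemma mulr_lin_r (c : Bd) : klinear (fun b : Bd => c * b).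
Proof. by move=> a x y; rewrite mulrDr scalerAr. Qed.

Lemma actdM b c v : actd (b * c) v = actd b (actd c v).
Proof.
move: b; apply: (tpow_ext tBd_pow (kl_comp (mulr_lin_l c) (actd_linb v))
   (actd_linb (actd c v))) => x.
move: c; apply: (tpow_ext tBd_pow (kl_comp (mulr_lin_r (tBd x)) (actd_linb v))
   (kl_comp (actd_linb v) (actd_lin (tBd x)))) => y /=.
move: v; apply: (tpow_ext HtM (actd_lin _) (kl_comp (actd_lin _) (actd_lin _))) => m.
rewrite tBdM !Hactd.2; congr tM; apply: funext => k; by case: HM => _ [_ ->].
Qed.

Lemma Lb_lin b : klinear (Lb b). Proof. by case: (HLb b). Qed.
Lemma LbE b v y : Lb b (tW v y) = tW (actd b v) y. Proof. by case: (HLb b). Qed.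
Lemma Rh_lin y : klinear (Rh y). Proof. by case: (HRh y). Qed.
Lemma RhE y v y' : Rh y (tW v y') = tW v (y' * y). Proof. by case: (HRh y). Qed.
Lemma Phi_lin i : klinear (Phi i). Proof. by case: (HPhi i). Qed.
Lemma PhiE i v y : Phi i (tW v y) = tW (sigMi i v) (h i * y) + tW (rhoMi i v) y.
Proof. by case: (HPhi i). Qed.

Lemma LbM b c u : Lb (b * c) u = Lb b (Lb c u).
Proof.
move: u; apply: (tensor2_ext HtW (Lb_lin _) (kl_comp (Lb_lin _) (Lb_lin _))) => v y.
by rewrite !LbE actdM.
Qed.
Lemma Lb1 u : Lb 1 u = u.
Proof.
move: u; apply: (tensor2_ext HtW (Lb_lin _) (@kl_id K W)) => v y.
by rewrite LbE actd1.
Qed.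
Lemma Rh1 u : Rh 1 u = u.
Proof.
move: u; apply: (tensor2_ext HtW (Rh_lin _) (@kl_id K W)) => v y.
by rewrite RhE mulr1.
Qed.
Lemma RhM y y' u : Rh y' (Rh y u) = Rh (y * y') u.
Proof.
move: u; apply: (tensor2_ext HtW (kl_comp (Rh_lin _) (Rh_lin _)) (Rh_lin _)) => v z.
by rewrite !RhE mulrA.
Qed.
Lemma RhL a y y' u : Rh (a *: y + y') u = a *: Rh y u + Rh y' u.
Proof.
move: u; apply: (tensor2_ext HtW (Rh_lin _) (kl_add (kl_scale a (Rh_lin y)) (Rh_lin y'))) => v z.
by rewrite !RhE mulrDr -scalerAr (tWlinR v).
Qed.
Lemma LbRh b y u : Lb b (Rh y u) = Rh y (Lb b u).
Proof.
move: u; apply: (tensor2_ext HtW (kl_comp (Rh_lin _) (Lb_lin _)) (kl_comp (Lb_lin _) (Rh_lin _))) => v z.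
by rewrite !RhE !LbE RhE.
Qed.

Lemma tauL_sum l v : exists s : seq (MT * Hc), tauL l v = \sum_(p <- s) tW p.1 p.2.
Proof.
elim: l => [|i l [s IH]] /=; first by exists [:: (v, 1)]; rewrite big_seq1.
exists ([seq (sigMi i p.1, h i * p.2) | p <- s] ++ [seq (rhoMi i p.1, p.2) | p <- s]).
rewrite /tauL /= in IH *; rewrite IH (kl_sum (Phi_lin i)) big_cat !big_map /=.
by rewrite (eq_bigr _ (fun p _ => PhiE i p.1 p.2)) big_split.
Qed.

Lemma tauL_lin l : klinear (tauL l).
Proof.
elim: l => [|i l IH] /=; first exact: tWlinL.
exact: (kl_comp IH (Phi_lin i)).
Qed.

Lemma tau_tauL w v : tau w v = tauL (r w) v. Proof. by []. Qed.

Lemma wprod_nil : wprod H [::] = 1. Proof. by rewrite /wprod big_nil. Qed.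
Lemma Hw1 : Hw 1%g = 1. Proof. by rewrite (r_one Hr) wprod_nil. Qed.
Lemma Hw_sgen i : Hw (sgen i) = H i.
Proof. by rewrite (r_sgen Hr) /wprod big_seq1. Qed.

Lemma ground2 w b v (bg : 'S_n.+2 -> Bd) :
  Hw w * j b = \sum_g j (bg g) * Hw g ->
  tau w (actd b v) = \sum_g Lb (bg g) (tau g v).
Proof. by case: Hground => _ [G2 _]; apply: G2. Qed.

Lemma ground3 w x v (c : 'S_n.+2 -> Bd) (s : seq (MT * Hc)) :
  Hw w * Hw x = \sum_g j (c g) * Hw g ->
  tau x v = \sum_(p <- s) tW p.1 p.2 ->
  \sum_g Lb (c g) (tau g v) = \sum_(p <- s) Rh p.2 (tau w p.1).
Proof. by case: Hground => _ [_ G3]; apply: G3. Qed.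

Lemma actW_linA u : klinear (fun a => actW a u). Proof. by case: HactW. Qed.
Lemma actW_lin a : klinear (actW a). Proof. by case: HactW => _ []. Qed.
Lemma actW_basic b w v y : actW (j b * Hw w) (tW v y) = Lb b (Rh y (tau w v)).
Proof. by case: HactW => _ [_]. Qed.

Lemma actW_sumA (I : Type) (s : seq I) (F : I -> A) u :
  actW (\sum_(i <- s) F i) u = \sum_(i <- s) actW (F i) u.
Proof. exact: (kl_sum (actW_linA u)). Qed.

Lemma actW_Rh1 a v y : actW a (tW v y) = Rh y (actW a (tW v 1)).
Proof.
case: (Hleft a) => e ->; rewrite !actW_sumA (kl_sum (Rh_lin y)).
by apply: eq_bigr => g _; rewrite !actW_basic Rh1 LbRh.
Qed.

Lemma actW_Rh a y u : actW a (Rh y u) = Rh y (actW a u).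
Proof.
move: u; apply: (tensor2_ext HtW (kl_comp (Rh_lin _) (actW_lin _)) (kl_comp (actW_lin _) (Rh_lin _))) => v z.
by rewrite RhE actW_Rh1 (actW_Rh1 a v z) RhM.
Qed.

Lemma actW_j b u : actW (j b) u = Lb b u.
Proof.
move: u; apply: (tensor2_ext HtW (actW_lin _) (Lb_lin _)) => v y.
by rewrite -[j b]mulr1 -Hw1 actW_basic tau_tauL (r_one Hr) /= RhE mul1r.
Qed.

Lemma mult_basic b w b' x v :
  actW (j b * Hw w * (j b' * Hw x)) (tW v 1) = actW (j b * Hw w) (actW (j b' * Hw x) (tW v 1)).
Proof.
case: (Hleft (Hw w * j b')) => bg hbg.
have /choice [c hc] : forall g, exists e : 'S_n.+2 -> Bd,
    Hw g * Hw x = \sum_k j (e k) * Hw k by move=> g; apply: Hleft.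
have eL : j b * Hw w * (j b' * Hw x) = \sum_g \sum_k j (b * bg g * c g k) * Hw k.
  rewrite mulrA -[j b * Hw w * j b']mulrA hbg mulr_sumr mulr_suml.
  apply: eq_bigr => g _; rewrite mulrA -jM -mulrA hc mulr_sumr.
  by apply: eq_bigr => k _; rewrite mulrA -jM.
case: (tauL_sum (r x) v) => s hs.
transitivity (\sum_g \sum_k Lb b (Lb (bg g) (Lb (c g k) (tau k v)))).
  rewrite eL actW_sumA; apply: eq_bigr => g _; rewrite actW_sumA.
  by apply: eq_bigr => k _; rewrite actW_basic Rh1 !LbM.
transitivity (\sum_g Lb b (Lb (bg g) (\sum_k Lb (c g k) (tau k v)))).
  by apply: eq_bigr => g _; rewrite !(kl_sum (Lb_lin _)).
rewrite [in RHS]actW_basic Rh1 tau_tauL hs (kl_sum (Lb_lin b')) (kl_sum (actW_lin _)).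
rewrite (eq_bigr (fun p => \sum_g Lb b (Lb (bg g) (Rh p.2 (tau g p.1))))); last first.
  move=> p _; rewrite LbE actW_basic (ground2 _ hbg) (kl_sum (Rh_lin _)) (kl_sum (Lb_lin _)).
  by apply: eq_bigr => g _; rewrite -LbRh.
rewrite exchange_big /=; apply: eq_bigr => g _.
by rewrite -!(kl_sum (Lb_lin _)) (ground3 (hc g) hs).
Qed.

Lemma mult1 a a' v : actW (a * a') (tW v 1) = actW a (actW a' (tW v 1)).
Proof.
case: (Hleft a) => e ->; case: (Hleft a') => e' ->.
rewrite mulr_suml !actW_sumA.
apply: eq_bigr => w _; rewrite mulr_sumr actW_sumA (kl_sum (actW_lin _)).
by apply: eq_bigr => x _; rewrite mult_basic.
Qed.

Lemma actW_mul a a' u : actW (a * a') u = actW a (actW a' u).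
Proof.
move: u; apply: (tensor2_ext HtW (actW_lin _) (kl_comp (actW_lin _) (actW_lin _))) => v y.
by rewrite actW_Rh1 mult1 [in RHS](actW_Rh1 a') actW_Rh.
Qed.

Lemma pI_bal : kbalanced j actd pI. Proof. by case: HpI. Qed.
Lemma pI_bil : kbilinear pI. Proof. by case: pI_bal. Qed.
Lemma pI_linR a : klinear (pI a). Proof. exact: (bilR_lin pI_bil). Qed.
Lemma pI_linL v : klinear (fun a => pI a v). Proof. exact: (bilL_lin pI_bil). Qed.
Lemma pI_balE a b v : pI (a * j b) v = pI a (actd b v). Proof. by case: pI_bal => _ ->. Qed.

Lemma fF_bal : kbalanced j actd (fun a v => actW a (tW v 1)).
Proof.
split; first split.
- by move=> v; apply: actW_linA.
- by move=> a; apply: (kl_comp (tWlinL 1) (actW_lin a)).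
- by move=> a b v; rewrite actW_mul actW_j LbE.
Qed.

Lemma tau1 v : tau 1%g v = tW v 1.
Proof. by rewrite tau_tauL (r_one Hr). Qed.

Lemma Hw_mul1 w : Hw w = j 1 * Hw w. Proof. by rewrite j1 mul1r. Qed.

Section WithF.
Variable F : Ind -> W.
Hypotheses (Flin : klinear F) (FE : forall a v, F (pI a v) = actW a (tW v 1)).

Lemma F_Hw w v : F (pI (Hw w) v) = tau w v.
Proof. by rewrite FE Hw_mul1 actW_basic Lb1 Rh1. Qed.

Lemma F_equiv a x : F (actI a x) = actW a (F x).
Proof.
move: x; apply: (btensor_ext HpI (kl_comp (HactI a).1 Flin) (kl_comp Flin (actW_lin a))) => a' v.
by rewrite (HactI a).2 !FE actW_mul.
Qed.

Section Bij.
Hypothesis Hsig : forall i, bijective (sigMi i).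
Local Notation S := ('S_n.+2).
Local Notation E := {ffun S -> K^o}.
Definition e1 : E := [ffun x => (x == 1%g)%:R].

Variable ev : Hc -> E -> E.
Hypothesis Hev : ev_morph false ev.
Hypothesis Hevh : forall i f, ev (h i) f = Tf chiS chiR i f.

Definition coef y := ev y e1.
Lemma coef1 : coef 1 = e1. Proof. by case: Hev => _ _ h1 _; rewrite /coef h1. Qed.
Lemma coef_lin a y y' : coef (a *: y + y') = a *: coef y + coef y'.
Proof. by case: Hev => _ hl _ _; rewrite /coef hl. Qed.
Lemma coef_h i y : coef (h i * y) = Tf chiS chiR i (coef y).
Proof. by case: Hev => _ _ _ hm; rewrite /coef hm /= Hevh. Qed.

Variable Om : W -> {ffun S -> MT}.
Hypothesis Om_lin : klinear Om.
Hypothesis OmE : forall v y, Om (tW v y) = [ffun x => coef y x *: v].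

Lemma fterm_lin (c : S -> K) (L : MT -> MT) (p : S -> S) : klinear L ->
  klinear (fun f : {ffun S -> MT} => [ffun x => c x *: L (f (p x))]).
Proof.
move=> hL a f g; apply/ffunP => x; rewrite !ffunE hL scalerDr !scalerA.
by rewrite mulrC.
Qed.

Definition c1 i (x : S) : K := if up i x then chiR else 1.
Definition c2 i (x : S) : K := if up i x then 0 else chiS.

Definition Pmap i (f : {ffun S -> MT}) : {ffun S -> MT} :=
  [ffun x => c1 i x *: sigMi i (f (si i x))] + [ffun x => c2 i x *: sigMi i (f x)]
  + [ffun x => 1 *: rhoMi i (f x)].

Lemma Pmap_lin i : klinear (Pmap i).
Proof.
apply: kl_add; first apply: kl_add.
- exact: (fterm_lin (c1 i) (si i) (Hsl i)).
- exact: (fterm_lin (c2 i) (fun x => x) (Hsl i)).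
- exact: (fterm_lin (fun=> 1) (fun x => x) (Hrl i)).
Qed.

Lemma PmapE i f x : Pmap i f x =
  c1 i x *: sigMi i (f (si i x)) + c2 i x *: sigMi i (f x) + 1 *: rhoMi i (f x).
Proof. by rewrite /Pmap !ffunE. Qed.

Lemma Om_Phi i u : Om (Phi i u) = Pmap i (Om u).
Proof.
move: u; apply: (tensor2_ext HtW (kl_comp (Phi_lin i) Om_lin) (kl_comp Om_lin (Pmap_lin i))) => v y.
rewrite PhiE (klD Om_lin) !OmE; apply/ffunP => x.
rewrite PmapE !ffunE coef_h TfE !(klZ (Hsl i)) !(klZ (Hrl i)) /c1 /c2.
case: (up i x) => /=.
  by rewrite scale0r addr0 scale1r scalerA.
by rewrite !scale1r scalerDl scalerA.
Qed.

Definition sigw (w : S) (v : MT) : MT := foldr (fun i u => sigMi i u) v (r w).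

Lemma foldr_sig0 (l : seq 'I_n.+1) v : foldr (fun i u => sigMi i u) v l = 0 -> v = 0.
Proof.
elim: l => [//|i l IH] /= e; apply: IH.
case: (Hsig i) => g g1 g2.
have := congr1 g e; rewrite g1 => ->.
by rewrite -{1}(kl0 (Hsl i)) g1.
Qed.

Lemma sigw0 w : sigw w 0 = 0.
Proof.
rewrite /sigw; elim: (r w) => [|i l IH] //=; by rewrite IH (kl0 (Hsl i)).
Qed.

Lemma tri (m : nat) : forall w v x, ninv w = m -> (ninv w <= ninv x)%N ->
  Om (tau w v) x = if x == w then sigw w v else 0.
Proof.
elim: m => [|m IH] w v x hw hx.
  have w1 : w = 1%g.
    by case: (word_of_inv hw) => s [hs /size0nil hs0]; rewrite -hs hs0 wordp_nil.
  subst w; rewrite tau1 OmE coef1 !ffunE /sigw (r_one Hr) /=.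
  by case: (x == 1%g); rewrite /= ?scale1r ?scale0r.
have hne : w != 1%g by apply/eqP => e; move: hw; rewrite e inv1.
case: (r_step Hr hne) => i [hr hup hinv].
set w' := si i w in hr hup hinv.
have hw' : ninv w' = m by move: hw; rewrite hinv => -[].
have -> : tau w v = Phi i (tau w' v) by rewrite !tau_tauL hr.
rewrite Om_Phi PmapE.
have gx : Om (tau w' v) x = 0.
  rewrite (IH w' v x hw'); last by lia.
  by case: eqP => // e; move: hx; rewrite e; lia.
rewrite gx (kl0 (Hsl i)) (kl0 (Hrl i)) !scaler0 !addr0.
have hsw : (si i x == w') = (x == w) by rewrite /w' (inj_eq (@si_inj n i)).
have ew : w = si i w' by rewrite /w' siK.
rewrite /c1; case hu : (up i x).
  have hs := inv_up hu.
  rewrite (IH w' v (si i x) hw'); last by lia.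
  have -> : (si i x == w') = false by apply/negbTE/eqP => e; move: hs; rewrite e; lia.
  rewrite (kl0 (Hsl i)) scaler0.
  case: eqP => // e; move: hu; rewrite e ew up_si hup //.
have hs := inv_down (negbT hu).
rewrite (IH w' v (si i x) hw'); last by lia.
rewrite hsw scale1r; case: eqP => _; last by rewrite (kl0 (Hsl i)).
by rewrite /sigw hr.
Qed.

Lemma tri' w v x : (ninv w <= ninv x)%N ->
  Om (tau w v) x = if x == w then sigw w v else 0.
Proof. by move=> hx; apply: (tri (m := ninv w)). Qed.

Lemma Ind_span z : exists xz : S -> MT, z = \sum_g pI (Hw g) (xz g).
Proof.
case: (btensor_span HpI z) => s ->.
elim: s => [|[a v] s [xz IH]].
  by exists (fun=> 0); rewrite big_nil big1 // => g _; rewrite (kl0 (pI_linR _)).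
case: (Hright a) => e ea.
exists (fun g => actd (e g) v + xz g).
rewrite big_cons IH /= ea (kl_sum (pI_linL v)).
rewrite -big_split /=; apply: eq_bigr => g _.
by rewrite pI_balE (klD (pI_linR _)).
Qed.

Lemma F_inj0 z : F z = 0 -> z = 0.
Proof.
case: (Ind_span z) => xz -> hF.
have hz : forall g, xz g = 0.
  move=> g0; apply/eqP/negPn/negP => hg0.
  case: (@arg_maxnP _ g0 (fun g => xz g != 0) (@ninv n) hg0) => w hw hmax.
  have key : Om (F (\sum_g pI (Hw g) (xz g))) w = sigw w (xz w).
    rewrite (kl_sum Flin) (kl_sum Om_lin) sum_ffunE (bigD1 w) //= F_Hw tri' // eqxx.
    rewrite big1 ?addr0 // => g hgw; rewrite F_Hw.
    case: (eqVneq (xz g) 0) => [->|hg].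
      by rewrite tau_tauL (kl0 (tauL_lin _)) (kl0 Om_lin) ffunE.
    rewrite tri'; last exact: hmax g hg.
    by case: eqP => // e; move: hgw; rewrite e eqxx.
  move: key; rewrite hF (kl0 Om_lin) ffunE => /esym /foldr_sig0 e.
  by move: hw; rewrite e eqxx.
by rewrite big1 // => g _; rewrite hz (kl0 (pI_linR _)).
Qed.

Lemma F_inj : injective F.
Proof.
move=> z1 z2 e; apply/eqP; rewrite -subr_eq0; apply/eqP/F_inj0.
by rewrite (klB Flin) e subrr.
Qed.

Variable sinv : 'I_n.+1 -> MT -> MT.
Hypothesis sinvK : forall i v, sigMi i (sinv i v) = v.

Lemma sinv_lin i : klinear (sinv i).
Proof.
move=> a x y; apply: (bij_inj (Hsig i)).
by rewrite (Hsl i) !sinvK.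
Qed.

Definition fi i a v := pI (a * H i) (sinv i v) + - pI a (rhoMi i (sinv i v)).

Lemma actW_Hi i u : actW (H i) (tW u 1) = Phi i (tW u 1).
Proof. by rewrite -Hw_sgen Hw_mul1 actW_basic Lb1 Rh1 tau_tauL (r_sgen Hr). Qed.

Lemma F_fi i a v : F (fi i a v) = actW a (tW v (h i)).
Proof.
rewrite (klD Flin) (klN Flin) !FE actW_mul actW_Hi PhiE mulr1 sinvK.
by rewrite (klD (actW_lin a)) addrK.
Qed.

Lemma mulA_lin (c : A) : klinear (fun a : A => a * c).
Proof. by move=> a x y; rewrite mulrDl scalerAl. Qed.

Lemma fi_bal i : kbalanced j actd (fi i).
Proof.
split; first split.
- move=> v; apply: kl_add.
    exact: (kl_comp (mulA_lin (H i)) (pI_linL _)).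
  exact: (kl_opp (pI_linL _)).
- move=> a; apply: kl_add.
    exact: (kl_comp (sinv_lin i) (pI_linR _)).
  exact: (kl_opp (kl_comp (kl_comp (sinv_lin i) (Hrl i)) (pI_linR _))).
- move=> a b v; apply: F_inj.
  by rewrite !F_fi actW_mul actW_j LbE.
Qed.

Variable Psi : 'I_n.+1 -> Ind -> Ind.
Hypotheses (Psi_lin : forall i, klinear (Psi i)) (PsiE : forall i a v, Psi i (pI a v) = fi i a v).

Lemma F_Psi i z : F (Psi i z) = Rh (h i) (F z).
Proof.
move: z; apply: (btensor_ext HpI (kl_comp (Psi_lin i) Flin) (kl_comp Flin (Rh_lin _))) => a v.
by rewrite PsiE F_fi FE -actW_Rh RhE mul1r.
Qed.

Lemma Rh0 u : Rh 0 u = 0.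
Proof.
move: u; apply: (tensor2_ext HtW (Rh_lin 0) (@kl_zero K W W)) => v y.
by rewrite RhE mulr0 (kl0 (tWlinR v)).
Qed.
Lemma RhZ a y u : Rh (a *: y) u = a *: Rh y u.
Proof. by have := RhL a y 0 u; rewrite !addr0 Rh0 addr0. Qed.
Lemma RhD y y' u : Rh (y + y') u = Rh y u + Rh y' u.
Proof. by have := RhL 1 y y' u; rewrite !scale1r. Qed.

Lemma Psi_rels : gen_rels chiS chiR Psi.
Proof.
case: HHc => [[[hb hc] hq] _].
split.
- exact: Psi_lin.
- move=> i z; apply: F_inj.
  rewrite !F_Psi RhM hq RhD RhZ RhZ Rh1 (klD Flin) !(klZ Flin) F_Psi //.
- by move=> i k e z; apply: F_inj; rewrite !F_Psi !RhM !mulrA (hb _ _ e).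
- by move=> i k e z; apply: F_inj; rewrite !F_Psi !RhM (hc _ _ e).
Qed.

Variable ev1 : Hc -> Ind -> Ind.
Hypotheses (Hev1 : ev_morph true ev1) (Hev1h : forall i z, ev1 (h i) z = Psi i z).
Variable z0 : Ind.
Hypothesis Hz0 : z0 != 0.

Local Notation V2 := (Ind * W)%type.
Definition Dm (y : Hc) (p : V2) : V2 := (ev1 y p.1, Rh y p.2).
Definition Um (p : V2) : V2 := (p.1, p.2 + F p.1).
Definition Uim (p : V2) : V2 := (p.1, p.2 - F p.1).
Definition Dm' (y : Hc) (p : V2) : V2 := Um (Dm y (Uim p)).

Lemma sc1 (a : K) (p : V2) : (a *: p).1 = a *: p.1. Proof. by []. Qed.
Lemma sc2 (a : K) (p : V2) : (a *: p).2 = a *: p.2. Proof. by []. Qed.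

Lemma UmK p : Um (Uim p) = p. Proof. by case: p => a b; rewrite /Um /Uim /= subrK. Qed.
Lemma UimK p : Uim (Um p) = p. Proof. by case: p => a b; rewrite /Um /Uim /= addrK. Qed.

Lemma Um_lin : klinear Um.
Proof.
move=> a [x1 x2] [y1 y2]; rewrite /Um /=; congr pair.
by rewrite sc2 (klD Flin) (klZ Flin) scalerDr addrACA.
Qed.
Lemma Uim_lin : klinear Uim.
Proof.
move=> a [x1 x2] [y1 y2]; rewrite /Uim /=; congr pair.
by rewrite sc2 (klD Flin) (klZ Flin) opprD scalerDr scalerN addrACA.
Qed.

Lemma Dm_morph : ev_morph true Dm.
Proof.
case: Hev1 => l1 a1 o1 m1.
split.
- move=> y a [x1 x2] [y1 y2]; rewrite /Dm /=; congr pair; first exact: l1.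
  exact: (Rh_lin y).
- by move=> a y y' [x1 x2]; rewrite /Dm /=; congr pair; [exact: a1 | exact: RhL].
- by move=> [x1 x2]; rewrite /Dm /= o1 Rh1.
- by move=> y y' [x1 x2]; rewrite /Dm /= m1 RhM.
Qed.

Lemma Dm'_morph : ev_morph true Dm'.
Proof.
case: Dm_morph => l1 a1 o1 m1.
split.
- by move=> y; apply: (kl_comp Uim_lin (kl_comp (l1 y) Um_lin)).
- by move=> a y y' p; rewrite /Dm' a1 (klD Um_lin) (klZ Um_lin).
- by move=> p; rewrite /Dm' o1 UmK.
- by move=> y y' p; rewrite /Dm' m1 /= UimK.
Qed.

Lemma F_ev1 y z : F (ev1 y z) = Rh y (F z).
Proof.
have Hv0 : (z0, 0) != 0 :> V2.
  by apply/eqP => /(congr1 fst) /= e; move: Hz0; rewrite e eqxx.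
have e := hecke_uniq HHc Hv0 Dm_morph Dm'_morph.
have eh : forall i p, Dm (h i) p = Dm' (h i) p.
  move=> i [x1 x2]; rewrite /Dm' /Dm /Um /Uim /= !Hev1h; congr pair.
  by rewrite (klB (Rh_lin _)) F_Psi subrK.
have := e eh y (z, 0); rewrite /Dm' /Dm /Um /Uim /= => -[].
rewrite (kl0 (Rh_lin y)) sub0r (klN (Rh_lin y)) => /eqP.
by rewrite eq_sym addrC subr_eq0 => /eqP.
Qed.

Lemma F_pI1 v : F (pI 1 v) = tW v 1.
Proof. by rewrite -Hw1 F_Hw tau1. Qed.

Lemma bij_F : bijective F.
Proof.
have gb : kbilinear (fun v y => ev1 y (pI 1 v)).
  case: Hev1 => l1 a1 _ _; split.
  - by move=> y; apply: (kl_comp (pI_linR 1) (l1 y)).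
  - by move=> v a y y'; rewrite a1.
case: (tensor2_lift HtW gb) => G [Glin GE].
have FG : forall u, F (G u) = u.
  apply: (tensor2_ext HtW (kl_comp Glin Flin) (@kl_id K W)) => v y.
  by rewrite GE F_ev1 F_pI1 RhE mul1r.
exists G => // z; apply: F_inj; by rewrite FG.
Qed.

End Bij.
End WithF.
Lemma e1_neq0 : (1 : K) != 0 -> e1 != 0.
Proof.
move=> HK; apply/eqP => /(congr1 (fun f : {ffun 'S_n.+2 -> K^o} => f 1%g)).
rewrite !ffunE eqxx mulr1n => e; move/eqP: HK; apply; exact: e.
Qed.

Lemma main_result : exists F : Ind -> W,
    klinear F /\
    (forall w v, F (pI (wprod H (r w)) v) = tau_of 1 tW Phi r w v) /\
    (forall a x, F (actI a x) = actW a (F x)) /\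
    ((forall i, bijective (sigMi i)) -> bijective F).
Proof.
case: (btensor_lift HpI fF_bal) => F [Flin FE].
exists F; split => //; split; first exact: F_Hw.
split; first exact: F_equiv.
move=> Hsig.
case: (eqVneq (1 : K) 0) => [h10|HK].
  have triv : forall (V : lmodType K) (v : V), v = 0.
    by move=> V v; rewrite -[v]scale1r h10 scale0r.
  exists (fun _ => 0) => [z|u]; first by rewrite (triv _ z).
  by rewrite (triv _ u) (kl0 Flin).
case: (@hecke_rep K n Hc h chiS chiR HHc _ false _ (e1_neq0 HK) _ (@Tf_rels K n chiS chiR)) => ev [Hev Hevh].
have ob : kbilinear (fun v y => [ffun x => coef ev y x *: v] : {ffun 'S_n.+2 -> MT}).
  split.
  - move=> y a v v'; apply/ffunP => x; rewrite !ffunE scalerDr !scalerA.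
    by rewrite mulrC.
  - move=> v a y y'; apply/ffunP => x; rewrite !ffunE coef_lin // !ffunE scalerDl.
    by rewrite scalerA.
case: (tensor2_lift HtW ob) => Om [Omlin OmE].
have /choice [sinv hs] : forall i, exists g : MT -> MT, forall v, sigMi i (g v) = v.
  by move=> i; case: (Hsig i) => g _ c2; exists g.
have /choice [Psi hPsi] : forall i, exists P : Ind -> Ind,
    klinear P /\ forall a v, P (pI a v) = fi sinv i a v.
  move=> i; apply: (btensor_lift HpI).
  exact: (fi_bal Flin FE Hsig Hev Hevh Omlin OmE hs i).
have Pl : forall i, klinear (Psi i) by move=> i; case: (hPsi i).
have PE : forall i a v, Psi i (pI a v) = fi sinv i a v by move=> i; case: (hPsi i).
case: (pselect (exists z0 : Ind, z0 != 0)) => [[z0 Hz0]|nz].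
  have hr := Psi_rels Flin FE Hsig Hev Hevh Omlin OmE hs Pl PE.
  case: (@hecke_rep K n Hc h chiS chiR HHc _ true _ Hz0 _ hr) => ev1 [Hev1 Hev1h].
  exact: (bij_F Flin FE Hsig Hev Hevh Omlin OmE hs Pl PE Hev1 Hev1h Hz0).
have zI : forall z : Ind, z = 0.
  by move=> z; apply/eqP/negPn/negP => hz; apply: nz; exists z.
have zW : forall u : W, u = 0.
  apply: (tensor2_ext HtW (@kl_id K W) (@kl_zero K W W)) => v y /=.
  by rewrite -[y]mul1r -RhE -(F_pI1 FE) (zI (pI 1 v)) (kl0 Flin) (kl0 (Rh_lin _)).
exists (fun _ => 0) => [z|u]; first by rewrite (zI z).
by rewrite (zW u).
Qed.

End Main.


Section Collect.
Variable K : comPzRingType.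

Lemma collect_gen (V : lmodType K) (T : finType) (Ix : Type) (s : seq Ix) (g : Ix -> T)
  (F : Ix -> V) :
  \sum_(i <- s) F i = \sum_(t : T) \sum_(i <- s | g i == t) F i.
Proof.
rewrite (exchange_big_dep xpredT) //=; apply: eq_bigr => i _.
by rewrite (big_pred1 (g i)) // => t; rewrite eq_sym.
Qed.

Lemma collectL (A Bd : algType K) (j : Bd -> A) (jl : klinear j) (T : finType)
  (Hw : T -> A) (Ix : Type) (s : seq Ix) (c : Ix -> K) (bb : Ix -> Bd) (g : Ix -> T) :
  \sum_(i <- s) c i *: (j (bb i) * Hw (g i)) =
  \sum_(t : T) j (\sum_(i <- s | g i == t) c i *: bb i) * Hw t.
Proof.
rewrite (collect_gen _ g); apply: eq_bigr => t _.
rewrite (kl_sum jl) mulr_suml; apply: eq_big => // i /eqP <-.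
by rewrite (klZ jl) scalerAl.
Qed.

Lemma collectR (A Bd : algType K) (j : Bd -> A) (jl : klinear j) (T : finType)
  (Hw : T -> A) (Ix : Type) (s : seq Ix) (c : Ix -> K) (bb : Ix -> Bd) (g : Ix -> T) :
  \sum_(i <- s) c i *: (Hw (g i) * j (bb i)) =
  \sum_(t : T) Hw t * j (\sum_(i <- s | g i == t) c i *: bb i).
Proof.
rewrite (collect_gen _ g); apply: eq_bigr => t _.
rewrite (kl_sum jl) mulr_sumr; apply: eq_big => // i /eqP <-.
by rewrite (klZ jl) scalerAr.
Qed.

End Collect.

Unset Implicit Arguments.
Theorem theorem5p3
  (K : comPzRingType) (n : nat) (* d = n.+2 >= 2 *)
  (* B, B (x) B, B^{(x) d} *)
  (B B2 Bd : algType K) (tB2 : B -> B -> B2) (tBd : ('I_n.+2 -> B) -> Bd)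
  (HB2 : is_tensor_alg2 tB2) (HBd : is_tensor_algpow tBd)
  (* S, R, sigma, rho and their versions at positions i, i+1 *)
  (S R : B2) (sigma rho : B2 -> B2) (Hsigma : klinear sigma) (Hrho : klinear rho)
  (Si Ri : 'I_n.+1 -> Bd) (HSi : loc_elt tBd tB2 S Si) (HRi : loc_elt tBd tB2 R Ri)
  (sigB rhoB : 'I_n.+1 -> Bd -> Bd)
  (HsigB : loc_ext tBd tB2 sigma sigB) (HrhoB : loc_ext tBd tB2 rho rhoB)
  (* the wreath algebra B wr H(d), with choice map r and H_w := H along r(w) *)
  (A : algType K) (j : Bd -> A) (H : 'I_n.+1 -> A)
  (HA : is_wreath_presentation j H Si Ri sigB rhoB)
  (r : 'S_n.+2 -> seq 'I_n.+1) (Hr : choice_map r)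
  (HPBW : exists (I : eqType) (bas : I -> B), is_basis bas /\
     is_basis (fun p : {ffun 'I_n.+2 -> I} * 'S_n.+2 =>
                 j (tBd (fun k => bas (p.1 k))) * wprod H (r p.2)) /\
     is_basis (fun p : {ffun 'I_n.+2 -> I} * 'S_n.+2 =>
                 wprod H (r p.2) * j (tBd (fun k => bas (p.1 k)))))
  (* the twisted Hecke algebra *)
  (chiS chiR : K) (Hc : algType K) (h : 'I_n.+1 -> Hc)
  (HHc : is_hecke_presentation h chiS chiR)
  (* the module M, M (x) M, M^{(x) d} *)
  (M M2 MT : lmodType K) (actM : B -> M -> M) (HM : is_module actM)
  (t2M : M -> M -> M2) (Ht2M : is_tensor2 t2M)
  (tM : ('I_n.+2 -> M) -> MT) (HtM : is_tensor_pow tM)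
  (act2 : B2 -> M2 -> M2)
  (Hact2 : kbilinear act2 /\
     forall b c m m', act2 (tB2 b c) (t2M m m') = t2M (actM b m) (actM c m'))
  (HSR : forall z, act2 S z = chiS *: z /\ act2 R z = chiR *: z)
  (actd : Bd -> MT -> MT)
  (Hactd : kbilinear actd /\
     forall x m, actd (tBd x) (tM m) = tM (fun k => actM (x k) (m k)))
  (sigmaM rhoM : M2 -> M2) (HsigmaM : klinear sigmaM) (HrhoM : klinear rhoM)
  (sigMi rhoMi : 'I_n.+1 -> MT -> MT)
  (HsigMi : loc_ext tM t2M sigmaM sigMi) (HrhoMi : loc_ext tM t2M rhoM rhoMi)
  (* W = M^{(x) d} (x) Hc and the operators used to define tau^M *)
  (W : lmodType K) (tW : MT -> Hc -> W) (HtW : is_tensor2 tW)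
  (Phi : 'I_n.+1 -> W -> W)
  (HPhi : forall i, klinear (Phi i) /\ forall v y,
     Phi i (tW v y) = tW (sigMi i v) (h i * y) + tW (rhoMi i v) y)
  (Lb : Bd -> W -> W)
  (HLb : forall b, klinear (Lb b) /\ forall v y, Lb b (tW v y) = tW (actd b v) y)
  (Rh : Hc -> W -> W)
  (HRh : forall y, klinear (Rh y) /\ forall v y', Rh y (tW v y') = tW v (y' * y))
  (* (M, sigma^M, rho^M) is a ground module *)
  (Hground : is_ground_module j H r tW Phi actd Lb Rh)
  (* ind_{1^d}^d (M^{(x)d}) = A (x)_{Bd} M^{(x)d} with its left A-action *)
  (Ind : lmodType K) (pI : A -> MT -> Ind) (HpI : is_btensor j actd pI)
  (actI : A -> Ind -> Ind)
  (HactI : forall a, klinear (actI a) /\ forall a' v, actI a (pI a' v) = pI (a * a') v)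
  (* the A-action on M wr Hc *)
  (actW : A -> W -> W)
  (HactW : (forall x, klinear (fun a => actW a x)) /\ (forall a, klinear (actW a)) /\
     forall b w v y, actW (j b * wprod H (r w)) (tW v y) =
                     Lb b (Rh y (tau_of 1 tW Phi r w v))) :
  exists F : Ind -> W,
    klinear F /\
    (forall w v, F (pI (wprod H (r w)) v) = tau_of 1 tW Phi r w v) /\
    (forall a x, F (actI a x) = actW a (F x)) /\
    ((forall i, bijective (sigMi i)) -> bijective F).

Proof.
have Hj : is_kalg_morph j by case: HA.
have jl : klinear j by case: Hj.
case: HPBW => I [bas [_ [[spanL _] [spanR _]]]].
have Hleft : forall a : A, exists e : 'S_n.+2 -> Bd, a = \sum_g j (e g) * wprod H (r g).
  move=> a; case: (spanL a) => s [c ->].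
  exists (fun t => \sum_(i <- s | i.2 == t) c i *: tBd (fun k => bas (i.1 k))).
  exact: (collectL jl (fun g => wprod H (r g)) s c (fun i => tBd (fun k => bas (i.1 k))) (fun i => i.2)).
have Hright : forall a : A, exists e : 'S_n.+2 -> Bd, a = \sum_g wprod H (r g) * j (e g).
  move=> a; case: (spanR a) => s [c ->].
  exists (fun t => \sum_(i <- s | i.2 == t) c i *: tBd (fun k => bas (i.1 k))).
  exact: (collectR jl (fun g => wprod H (r g)) s c (fun i => tBd (fun k => bas (i.1 k))) (fun i => i.2)).
have Hsl : forall i, klinear (sigMi i) by move=> i; case: (HsigMi i).
have Hrl : forall i, klinear (rhoMi i) by move=> i; case: (HrhoMi i).
exact: (main_result HBd Hj Hr Hleft Hright HHc HM HtM Hactd Hsl Hrl HtW HPhi HLb HRh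
  Hground HpI HactI HactW).
Qed.
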